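(* Let $R$ be a unital associative ring and $$A=\begin{pmatrix}1&1&1\\1&a&b\\1&c&d\end{pmatrix}\in\widehat{\cal S}.$$ Then $\Phi^2(A)=\omega^{-1}\Phi^{-1}(A)\omega$, where $$\omega=\bigl[d(d-b)^{-1}-c(c-a)^{-1}\bigr]^{-1}\bigl[d(d-b)^{-1}(b-1)-c(c-a)^{-1}(a-1)\bigr]\bigl[(d-c)^{-1}(c-1)-(b-a)^{-1}(a-1)\bigr].$$
   Context: $R^*$: units of $R$. $M_3^*(R)$: invertible $3\times3$ matrices; $M_3^\star(R)$: matrices with all entries in $R^*$. $J_1(M)=M^{-1}$ on $M_3^*(R)$; $J_2(M)_{jk}=(M_{kj})^{-1}$ on $M_3^\star(R)$; $J=J_2\circ J_1$, $J^{-1}=J_1\circ J_2$, where $g\circ f$ has domain $\{x\in{\rm dom}(f):f(x)\in{\rm dom}(g)\}$. $\widehat M_3(R)$: matrices whose first row and column consist of $1$'s. For $A=\{a_{j,k}\}\in M_3^\star(R)$: $\Lambda^L(A)_{j,k}=a_{1,1}a_{j,1}^{-1}a_{j,k}a_{1,k}^{-1}$, $\Lambda^R(A)_{j,k}=a_{j,1}^{-1}a_{j,k}a_{1,k}^{-1}a_{1,1}$. $\Phi(A)=J_2(\Lambda^L(A^{-1}))$ with ${\rm dom}(\Phi)={\rm dom}(J)\cap\widehat M_3(R)\cap M_3^\star(R)$; $\Phi^{-1}(A)=\Lambda^R(J^{-1}(A))$. ${\cal S}=\{M\in M_3(R):$ all square submatrices of $M$ are invertible and $J_2(M)$ is invertible$\}$,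 $\widehat{\cal S}={\cal S}\cap\widehat M_3(R)$. $\omega^{-1}B\omega$ denotes the matrix with entries $\omega^{-1}B_{jk}\omega$. *)

(* Defs.v *)
From HB Require Import structures.
From mathcomp Require Import all_boot all_order all_algebra.
From Stdlib Require Import ClassicalEpsilon.
Set Implicit Arguments. Unset Strict Implicit. Unset Printing Implicit Defensive.
Import GRing.Theory.
Local Open Scope ring_scope.

Section Defs.
Variable R : unitRingType.

Definition mx_invertible (n : nat) (M : 'M[R]_n) : Prop :=
  exists B : 'M[R]_n, M *m B = 1%:M /\ B *m M = 1%:M.

(* the inverse M^{-1} (meaningful when M is invertible) *)
Definition minv (n : nat) (M : 'M[R]_n) : 'M[R]_n :=
  epsilon (inhabits M) (fun B => M *m B = 1%:M /\ B *m M = 1%:M).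

Definition all_units (M : 'M[R]_3) : Prop := forall j k, M j k \is a GRing.unit.

(* J_1 = minv on M_3^*(R) ; J_2 on M_3^star(R) *)
Definition J2 (M : 'M[R]_3) : 'M[R]_3 := \matrix_(j, k) (M k j)^-1.

Definition domJ (M : 'M[R]_3) : Prop := mx_invertible M /\ all_units (minv M).
Definition J (M : 'M[R]_3) : 'M[R]_3 := J2 (minv M).
Definition domJinv (M : 'M[R]_3) : Prop := all_units M /\ mx_invertible (J2 M).
Definition Jinv (M : 'M[R]_3) : 'M[R]_3 := minv (J2 M).

Definition is_hat (M : 'M[R]_3) : Prop := forall k, M 0 k = 1 /\ M k 0 = 1.

Definition LambdaL (A : 'M[R]_3) : 'M[R]_3 :=
  \matrix_(j, k) (A 0 0 * (A j 0)^-1 * A j k * (A 0 k)^-1).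
Definition LambdaR (A : 'M[R]_3) : 'M[R]_3 :=
  \matrix_(j, k) ((A j 0)^-1 * A j k * (A 0 k)^-1 * A 0 0).

Definition domPhi (A : 'M[R]_3) : Prop := domJ A /\ is_hat A /\ all_units A.
Definition Phi (A : 'M[R]_3) : 'M[R]_3 := J2 (LambdaL (minv A)).

(* Phi^{-1}(A) = Lambda^R(J^{-1}(A)): defined when A in dom(J^{-1}) and
   J^{-1}(A) in M_3^star(R) (the domain of Lambda^R) *)
Definition domPhiinv (A : 'M[R]_3) : Prop := domJinv A /\ all_units (Jinv A).
Definition Phiinv (A : 'M[R]_3) : 'M[R]_3 := LambdaR (Jinv A).

Definition in_S (M : 'M[R]_3) : Prop :=
  (forall (k : nat) (f g : 'I_k -> 'I_3), injective f -> injective g ->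
     mx_invertible (\matrix_(i, j) M (f i) (g j)))
  /\ all_units M /\ mx_invertible (J2 M).

Definition in_Shat (M : 'M[R]_3) : Prop := in_S M /\ is_hat M.

Definition hatmx (a b c d : R) : 'M[R]_3 :=
  \matrix_(i, j) match nat_of_ord i, nat_of_ord j with
                 | 1%N, 1%N => a | 1%N, 2%N => b
                 | 2%N, 1%N => c | 2%N, 2%N => d
                 | _, _ => 1 end.

Definition conj_by (w : R) (B : 'M[R]_3) : 'M[R]_3 := \matrix_(j, k) (w^-1 * B j k * w).

Definition omega (a b c d : R) : R :=
  (d * (d - b)^-1 - c * (c - a)^-1)^-1
  * (d * (d - b)^-1 * (b - 1) - c * (c - a)^-1 * (a - 1))
  * ((d - c)^-1 * (c - 1) - (b - a)^-1 * (a - 1)).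

End Defs.

(* Main.v *)
Require Import Defs.
From mathcomp Require Import all_boot all_order all_algebra.
From Stdlib Require Import PeanoNat ClassicalEpsilon.
From Stdlib Require List.
Set Implicit Arguments. Unset Strict Implicit. Unset Printing Implicit Defensive.
Import GRing.Theory.
Local Open Scope ring_scope.

Definition word := seq nat.
Definition term := (int * word)%type.
Definition poly := seq term.

Fixpoint lexcmp (u v : word) : comparison :=
  match u, v with
  | [::], [::] => Eq
  | [::], _ => Lt
  | _, [::] => Gt
  | x :: u', y :: v' => match Nat.compare x y with Eq => lexcmp u' v' | c => c end
  end.
Definition wcmp (u v : word) : comparison :=
  match Nat.compare (size u) (size v) with Eq => lexcmp u v | c => c end.

Fixpoint ins (t : term) (p : poly) : poly :=
  match p with
  | [::] => if t.1 == 0 then [::] else [:: t]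
  | s :: p' => match wcmp t.2 s.2 with
               | Gt => if t.1 == 0 then p else t :: p
               | Eq => let c := t.1 + s.1 in if c == 0 then p' else (c, s.2) :: p'
               | Lt => s :: ins t p'
               end
  end.
Definition canon (p : poly) : poly := foldr ins [::] p.
Definition pneg (p : poly) : poly := [seq (- t.1, t.2) | t <- p].
Definition pmul (p q : poly) : poly :=
  canon (flatten [seq [seq (t.1 * s.1, t.2 ++ s.2) | s <- q] | t <- p]).
Definition psub (p q : poly) : poly := canon (p ++ pneg q).
Definition mono (w : word) : poly := [:: (1, w)].

Inductive ncE := EAt of nat | E0 | E1 | EAdd of ncE & ncE | EOpp of ncE | EMul of ncE & ncE.
Fixpoint toP (e : ncE) : poly :=
  match e with
  | EAt i => [:: (1, [:: i])]
  | E0 => [::]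
  | E1 => [:: (1, [::])]
  | EAdd x y => canon (toP x ++ toP y)
  | EOpp x => pneg (toP x)
  | EMul x y => pmul (toP x) (toP y)
  end.

Definition rule := (word * poly)%type.

Fixpoint isprefix (l w : word) : option word :=
  match l, w with
  | [::], _ => Some w
  | x :: l', y :: w' => if Nat.eqb x y then isprefix l' w' else None
  | _, _ => None
  end.
Fixpoint findsub (l w : word) : option (word * word) :=
  match isprefix l w with
  | Some s => Some ([::], s)
  | None => match w with
            | [::] => None
            | y :: w' => match findsub l w' with
                         | Some (pre, s) => Some (y :: pre, s)
                         | None => None end
            end
  end.

Definition scale (c : int) (pre suf : word) (p : poly) : poly :=
  [seq (c * t.1, pre ++ t.2 ++ suf) | t <- p].

Fixpoint try_rules (rs : seq rule) (t : term) : option poly :=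
  match rs with
  | [::] => None
  | r :: rs' => match findsub r.1 t.2 with
                | Some (pre, suf) => Some (scale t.1 pre suf r.2)
                | None => try_rules rs' t
                end
  end.

Fixpoint step (rs : seq rule) (p : poly) : option poly :=
  match p with
  | [::] => None
  | t :: p' => match try_rules rs t with
               | Some q => Some (canon (p' ++ q))
               | None => match step rs p' with
                         | Some q => Some (canon (t :: q))
                         | None => None end
               end
  end.

Fixpoint reduce (fuel : nat) (rs : seq rule) (p : poly) : poly :=
  match fuel with
  | 0 => p
  | S f => match step rs p with Some q => reduce f rs q | None => p end
  end.

Definition orient (e : poly) : option rule :=
  match e with
  | (c, w) :: rest => if (c == 1) then Some (w, pneg rest)
                      else if (c == -1) then Some (w, rest) else None
  | [::] => None
  end.

Definition addeq (fuel : nat) (rs : seq rule) (e : poly) : seq rule :=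
  match orient (reduce fuel rs e) with Some r => rcons rs r | None => rs end.

Definition addeq_deg (fuel maxdeg : nat) (rs : seq rule) (e : poly) : seq rule :=
  match orient (reduce fuel rs e) with
  | Some r => if (size r.1 <= maxdeg)%N then rcons rs r else rs
  | None => rs end.

Definition ovl_k (r1 r2 : rule) (k : nat) : option poly :=
  let n := size r1.1 in
  if (drop (n - k) r1.1 == take k r2.1) then
    Some (psub (pmul r1.2 (mono (drop k r2.1))) (pmul (mono (take (n - k) r1.1)) r2.2))
  else None.
Definition ovl_inc (r1 r2 : rule) : option poly :=
  if r1.1 == r2.1 then None else
  match findsub r2.1 r1.1 with
  | Some (pre, suf) => Some (psub r1.2 (pmul (pmul (mono pre) r2.2) (mono suf)))
  | None => None end.
Definition overlaps (r1 r2 : rule) : seq poly :=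
  pmap id ([seq ovl_k r1 r2 k | k <- iota 1 (minn (size r1.1) (size r2.1)).-1] ++ [:: ovl_inc r1 r2]).

Definition round (fuel maxdeg : nat) (rs : seq rule) : seq rule :=
  foldl (fun acc pr => foldl (addeq_deg fuel maxdeg) acc (overlaps pr.1 pr.2))
        rs [seq (r1, r2) | r1 <- rs, r2 <- rs].
Fixpoint complete (n fuel maxdeg : nat) (rs : seq rule) : seq rule :=
  match n with 0 => rs | S n' => complete n' fuel maxdeg (round fuel maxdeg rs) end.

Definition ncheck (hyps : seq (ncE * ncE)) (l r : ncE) (rounds maxdeg fuel : nat) : bool :=
  let rs0 := foldl (fun rs h => addeq fuel rs (psub (toP h.1) (toP h.2))) [::] hyps in
  let rs := complete rounds fuel maxdeg rs0 in
  nilp (reduce fuel rs (psub (toP l) (toP r))).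

Section Sound.
Variable R : nzRingType.
Variable env : seq R.
Definition atomI i := nth 0 env i.
Definition wordI (w : word) : R := foldr (fun i acc => atomI i * acc) 1 w.
Definition termI (t : term) : R := t.1%:~R * wordI t.2.
Definition polyI (p : poly) : R := foldr (fun t acc => termI t + acc) 0 p.
Fixpoint exprI (e : ncE) : R :=
  match e with
  | EAt i => atomI i | E0 => 0 | E1 => 1
  | EAdd x y => exprI x + exprI y | EOpp x => - exprI x
  | EMul x y => exprI x * exprI y end.

Lemma wordI_cat u v : wordI (u ++ v) = wordI u * wordI v.
Proof. by elim: u => [|i u IH] /=; rewrite ?mul1r // IH mulrA. Qed.

Lemma polyI_cat p q : polyI (p ++ q) = polyI p + polyI q.
Proof. by elim: p => [|t p IH] /=; rewrite ?add0r // IH addrA. Qed.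

Lemma lexcmp_eq u v : lexcmp u v = Eq -> u = v.
Proof.
elim: u v => [|x u IH] [|y v] //=.
by case H: (Nat.compare x y) => // /IH ->; rewrite (Nat.compare_eq _ _ H).
Qed.
Lemma wcmp_eq u v : wcmp u v = Eq -> u = v.
Proof. by rewrite /wcmp; case: (Nat.compare _ _) => //; apply: lexcmp_eq. Qed.

Lemma termI0 w : termI (0, w) = 0.
Proof. by rewrite /termI mul0r. Qed.

Lemma ins_sound t p : polyI (ins t p) = termI t + polyI p.
Proof.
case: t => c w.
elim: p => [|[d s] p IH] /=.
  by case: eqP => [->|_] /=; rewrite ?termI0 ?addr0.
case E: (wcmp w s) => /=.
- move/wcmp_eq: E => <-.
  have HT : termI (c + d, w) = termI (c, w) + termI (d, w) by rewrite /termI /= intrD mulrDl.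
  case: eqP => [H0|_] /=.
    by rewrite addrA -HT H0 termI0 add0r.
  by rewrite HT addrA.
- by rewrite IH addrCA.
- by case: eqP => [->|_] /=; rewrite ?termI0 ?add0r.
Qed.

Lemma canon_sound p : polyI (canon p) = polyI p.
Proof. by elim: p => [|t p IH] //=; rewrite ins_sound IH. Qed.

Lemma pneg_sound p : polyI (pneg p) = - polyI p.
Proof.
elim: p => [|[c w] p IH] /=; first by rewrite oppr0.
by rewrite IH opprD /termI /= intrN mulNr.
Qed.

Lemma termI_mul c w d v : termI (c * d, w ++ v) = termI (c, w) * termI (d, v).
Proof.
rewrite /termI /= wordI_cat intrM -!mulrA; congr (_ * _).
by rewrite !mulrzl mulrzAr.
Qed.

Lemma pmul_sound p q : polyI (pmul p q) = polyI p * polyI q.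
Proof.
rewrite /pmul canon_sound.
elim: p => [|[c w] p IH] /=; first by rewrite mul0r.
rewrite polyI_cat IH mulrDl; congr (_ + _).
clear IH; elim: q => [|[d v] q IHq] /=; first by rewrite mulr0.
by rewrite IHq mulrDr termI_mul.
Qed.

Lemma psub_sound p q : polyI (psub p q) = polyI p - polyI q.
Proof. by rewrite /psub canon_sound polyI_cat pneg_sound. Qed.

Lemma mono_sound w : polyI (mono w) = wordI w.
Proof. by rewrite /= /termI /= mul1r addr0. Qed.

Lemma toP_sound e : polyI (toP e) = exprI e.
Proof.
elim: e => [i||| x IHx y IHy | x IHx | x IHx y IHy] /=.
- by rewrite /termI /= mul1r mulr1 addr0.
- by [].
- by rewrite /termI /= mul1r addr0.
- by rewrite canon_sound polyI_cat IHx IHy.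
- by rewrite pneg_sound IHx.
- by rewrite pmul_sound IHx IHy.
Qed.

Definition rvalid (r : rule) := wordI r.1 = polyI r.2.
Definition rsvalid (rs : seq rule) := forall r, List.In r rs -> rvalid r.

Lemma isprefix_sound l w s : isprefix l w = Some s -> w = l ++ s.
Proof.
elim: l w => [|x l IH] [|y w] //=; first by case=> ->.
  by case=> ->.
case: (Nat.eqb_spec x y) => // -> /IH ->; by [].
Qed.

Lemma findsub_sound l w pre suf : findsub l w = Some (pre, suf) -> w = pre ++ l ++ suf.
Proof.
elim: w pre suf => [|y w IH] pre suf /=.
  case E: (isprefix l [::]) => [s|] //; case=> <- <-; exact: isprefix_sound E.
case E: (isprefix l (y :: w)) => [s|].
  by case=> <- <-; exact: isprefix_sound E.
case F: (findsub l w) => [[pre' s]|] //.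
by case=> <- <-; rewrite (IH _ _ F).
Qed.

Lemma scale_sound c pre suf p :
  polyI (scale c pre suf p) = c%:~R * wordI pre * polyI p * wordI suf.
Proof.
elim: p => [|[d v] p IH] /=; first by rewrite mulr0 mul0r.
rewrite IH mulrDr mulrDl; congr (_ + _).
rewrite /termI /= !wordI_cat intrM.
rewrite -!mulrA; congr (_ * _).
by rewrite !mulrzl ?mulrzAr ?mulrzAl !mulrA.
Qed.

Lemma try_rules_sound rs t q : rsvalid rs -> try_rules rs t = Some q -> polyI q = termI t.
Proof.
elim: rs => [|r rs IH] //= Hv.
case E: (findsub r.1 t.2) => [[pre suf]|].
  case=> <-; rewrite scale_sound.
  have Hr : rvalid r by apply: Hv; left.
  clear IH; case: t E => c w /= /findsub_sound ->.
  rewrite /termI /= !wordI_cat Hr. rewrite !mulrA. done.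
by apply: IH => r' Hr'; apply: Hv; right.
Qed.

Lemma step_sound rs p q : rsvalid rs -> step rs p = Some q -> polyI q = polyI p.
Proof.
move=> Hv; elim: p q => [|t p IH] q //=.
case E: (try_rules rs t) => [q'|].
  case=> <-; rewrite canon_sound polyI_cat (try_rules_sound Hv E) addrC; by [].
case F: (step rs p) => [q'|] //.
case=> <-; rewrite /= ins_sound canon_sound (IH _ F); by [].
Qed.

Lemma reduce_sound n rs p : rsvalid rs -> polyI (reduce n rs p) = polyI p.
Proof.
move=> Hv; elim: n p => [|n IH] p //=.
case E: (step rs p) => [q|] //.
by rewrite IH (step_sound Hv E).
Qed.

Lemma orient_sound e r : polyI e = 0 -> orient e = Some r -> rvalid r.
Proof.
case: e => [|[c w] rest] //= H.
case: eqP => [Hc|_].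
  case=> <-; rewrite /rvalid /= pneg_sound; apply/eqP; rewrite -addr_eq0.
  by rewrite -H Hc /termI /= mul1r.
case: eqP => [Hc|_] // [<-]; rewrite /rvalid /=.
apply/eqP; rewrite -subr_eq0 -oppr_eq0 opprB -H Hc /termI /= mulN1r.
by rewrite addrC.
Qed.

Lemma rsvalid_rcons rs r : rsvalid rs -> rvalid r -> rsvalid (rcons rs r).
Proof.
move=> Hv Hr r'; rewrite -cats1 List.in_app_iff => [[|]]; first exact: Hv.
by case=> // <-.
Qed.

Lemma addeq_sound n rs e : rsvalid rs -> polyI e = 0 -> rsvalid (addeq n rs e).
Proof.
move=> Hv He; rewrite /addeq.
case E: (orient _) => [r|] //.
apply: rsvalid_rcons => //; apply: orient_sound E.
by rewrite reduce_sound.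
Qed.

Lemma addeq_deg_sound n m rs e : rsvalid rs -> polyI e = 0 -> rsvalid (addeq_deg n m rs e).
Proof.
move=> Hv He; rewrite /addeq_deg.
case E: (orient _) => [r|] //; case: ifP => // _.
apply: rsvalid_rcons => //; apply: orient_sound E.
by rewrite reduce_sound.
Qed.

Lemma overlaps_sound r1 r2 : rvalid r1 -> rvalid r2 ->
  forall e, e \in overlaps r1 r2 -> polyI e = 0.
Proof.
case: r1 => l1 p1; case: r2 => l2 p2; rewrite /rvalid /= => H1 H2 e.
rewrite /overlaps mem_pmap map_id mem_cat => /orP [].
  case/mapP => k _ /esym.
  rewrite /ovl_k /=; case: eqP => // Ho [<-].
  rewrite psub_sound !pmul_sound !mono_sound -H1 -H2 -!wordI_cat.
  apply/eqP; rewrite subr_eq0; apply/eqP; congr wordI.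
  by rewrite -{2}(cat_take_drop k l2) -Ho catA cat_take_drop.
rewrite inE => /eqP; rewrite /ovl_inc /=.
case: eqP => // _; case E: (findsub l2 l1) => [[pre suf]|] // [->].
rewrite psub_sound !pmul_sound !mono_sound -H1 -H2 (findsub_sound E) !wordI_cat.
by rewrite mulrA subrr.
Qed.

Lemma foldl_addeq_sound n m rs es : rsvalid rs -> (forall e, e \in es -> polyI e = 0) ->
  rsvalid (foldl (addeq_deg n m) rs es).
Proof.
elim: es rs => [|e es IH] rs //= Hv He.
apply: IH; last by move=> e' He'; apply: He; rewrite inE He' orbT.
by apply: addeq_deg_sound => //; apply: He; rewrite inE eqxx.
Qed.

Lemma mem_In (T : eqType) (x : T) s : x \in s -> List.In x s.
Proof. elim: s => [|y s IH] //=; rewrite inE => /orP [/eqP ->|/IH]; by [left|right]. Qed.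

Lemma round_sound n m rs : rsvalid rs -> rsvalid (round n m rs).
Proof.
move=> Hv; rewrite /round.
have Hp : forall pr, pr \in [seq (r1, r2) | r1 <- rs, r2 <- rs] -> rvalid pr.1 /\ rvalid pr.2.
  move=> [r1 r2] /allpairsP [[x y] /= [Hx Hy [-> ->]]].
  by split; apply: Hv; apply: mem_In.
move: Hp; move: [seq _ | _ <- rs, _ <- rs] => prs Hp.
elim: prs rs Hv Hp => [|pr prs IH] acc Hacc Hp //=.
apply: IH; last by move=> pr' Hpr'; apply: Hp; rewrite inE Hpr' orbT.
have [H1 H2] := Hp pr (mem_head _ _).
by apply: foldl_addeq_sound => //; apply: overlaps_sound.
Qed.

Lemma complete_sound k n m rs : rsvalid rs -> rsvalid (complete k n m rs).
Proof. by elim: k rs => [|k IH] rs //= Hv; apply: IH; apply: round_sound. Qed.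

Definition hvalid (hyps : seq (ncE * ncE)) : Prop :=
  foldr (fun h acc => exprI h.1 = exprI h.2 /\ acc) True hyps.

Lemma hyps_sound n hyps acc : hvalid hyps -> rsvalid acc ->
  rsvalid (foldl (fun rs h => addeq n rs (psub (toP h.1) (toP h.2))) acc hyps).
Proof.
elim: hyps acc => [|h hs IH] acc //= [Hh1 Hh2] Hacc.
apply: IH => //; apply: addeq_sound => //.
by rewrite psub_sound !toP_sound Hh1 subrr.
Qed.

Lemma ncheck_sound hyps l r k m n :
  hvalid hyps -> ncheck hyps l r k m n = true -> exprI l = exprI r.
Proof.
rewrite /ncheck => Hh.
have Hv0 : rsvalid (foldl (fun rs h => addeq n rs (psub (toP h.1) (toP h.2))) [::] hyps) by apply: hyps_sound => // r0 [].
have Hv := @complete_sound k n m _ Hv0.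
move=> /nilP E; apply/eqP; rewrite -subr_eq0 -!toP_sound -psub_sound.
by rewrite -(reduce_sound n _ Hv) E.
Qed.
End Sound.

Ltac nc_lookup x l :=
  lazymatch l with
  | x :: _ => constr:(O)
  | _ :: ?t => let n := nc_lookup x t in constr:(S n)
  | _ => fail 100 "atom not in list:" x
  end.
Ltac nc_reif env t :=
  lazymatch t with
  | @GRing.zero _ => constr:(E0)
  | @GRing.one _ => constr:(E1)
  | @GRing.add _ ?x ?y => let a := nc_reif env x in let b := nc_reif env y in constr:(EAdd a b)
  | @GRing.opp _ ?x => let a := nc_reif env x in constr:(EOpp a)
  | @GRing.mul _ ?x ?y => let a := nc_reif env x in let b := nc_reif env y in constr:(EMul a b)
  | _ => let i := nc_lookup t env in constr:(EAt i)
  end.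
Ltac nc_reif_hyps env T :=
  lazymatch T with
  | True => constr:(@nil (ncE * ncE))
  | (?l = ?r) /\ ?rest =>
      let a := nc_reif env l in let b := nc_reif env r in
      let t := nc_reif_hyps env rest in constr:((a, b) :: t)
  end.
Ltac ncr env H k m n :=
  lazymatch goal with |- @eq ?T ?l ?r =>
    let el := nc_reif env l in let er := nc_reif env r in
    let TH := type of H in let hs := nc_reif_hyps env TH in
    refine (@ncheck_sound _ env hs el er k m n H _);
    vm_compute; reflexivity
  end.



Definition o0 : 'I_3 := @Ordinal 3 0 isT.
Definition o1 : 'I_3 := @Ordinal 3 1 isT.
Definition o2 : 'I_3 := @Ordinal 3 2 isT.

Lemma mulmx3E (R : pzRingType) (X Y : 'M[R]_3) i j :
  (X *m Y) i j = X i o0 * Y o0 j + X i o1 * Y o1 j + X i o2 * Y o2 j.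
Proof.
rewrite mxE !big_ord_recl big_ord0 addr0 !addrA.
have -> : (lift (ord0 : 'I_3) (lift ord0 ord0)) = o2 by apply/val_inj.
have -> : (lift (ord0 : 'I_3) ord0) = o1 by apply/val_inj.
have -> : (ord0 : 'I_3) = o0 by apply/val_inj.
by [].
Qed.

Ltac U H := constr:(conj (mulrV H) (conj (mulVr H) I)).

Lemma zo : (0 : 'I_3) = o0. Proof. by apply/val_inj. Qed.
Lemma ord3P (P : 'I_3 -> Prop) : P o0 -> P o1 -> P o2 -> forall i, P i.
Proof.
move=> H0 H1 H2 [[|[|[|n]]] Hn] //.
- by have -> : Ordinal Hn = o0 by apply/val_inj.
- by have -> : Ordinal Hn = o1 by apply/val_inj.
- by have -> : Ordinal Hn = o2 by apply/val_inj.
Qed.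

Lemma uM (R : unitRingType) (x y : R) : x \is a GRing.unit -> y \is a GRing.unit -> x * y \is a GRing.unit.
Proof. by move=> Hx Hy; rewrite unitrMl. Qed.
Lemma uN (R : unitRingType) (x y : R) : x - y \is a GRing.unit -> y - x \is a GRing.unit.
Proof. by rewrite -opprB unitrN. Qed.
Lemma inv4 (R : unitRingType) (x y z w : R) :
  x \is a GRing.unit -> y \is a GRing.unit -> z \is a GRing.unit -> w \is a GRing.unit ->
  (x * y^-1 * z * w^-1)^-1 = w * z^-1 * y * x^-1.
Proof.
move=> Ux Uy Uz Uw.
have Uy' : y^-1 \is a GRing.unit by rewrite unitrV.
have Uw' : w^-1 \is a GRing.unit by rewrite unitrV.
rewrite invrM ?uM // invrK invrM ?uM // invrM // invrK !mulrA //.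
Qed.

Section Hat.
Variable R : unitRingType.
Variables (a b c d : R) (m : 'M[R]_3) (g11 g12 g21 g22 : R).
Hypothesis HM1 : hatmx a b c d *m m = 1%:M.
Hypothesis HM2 : m *m hatmx a b c d = 1%:M.
Hypotheses (Ua1 : a - 1 \is a GRing.unit) (Ub1 : b - 1 \is a GRing.unit)
           (Uc1 : c - 1 \is a GRing.unit) (Ud1 : d - 1 \is a GRing.unit).
Hypotheses (Uba : b - a \is a GRing.unit) (Udc : d - c \is a GRing.unit)
           (Uca : c - a \is a GRing.unit) (Udb : d - b \is a GRing.unit).
Hypotheses (G1 : a * g11 + b * g21 = 1) (G2 : a * g12 + b * g22 = 0)
           (G3 : c * g11 + d * g21 = 0) (G4 : c * g12 + d * g22 = 1)
           (G5 : g11 * a + g12 * c = 1) (G6 : g11 * b + g12 * d = 0)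
           (G7 : g21 * a + g22 * c = 0) (G8 : g21 * b + g22 * d = 1).

Local Notation m00 := (m o0 o0). Local Notation m01 := (m o0 o1). Local Notation m02 := (m o0 o2).
Local Notation m10 := (m o1 o0). Local Notation m11 := (m o1 o1). Local Notation m12 := (m o1 o2).
Local Notation m20 := (m o2 o0). Local Notation m21 := (m o2 o1). Local Notation m22 := (m o2 o2).

Local Ltac getL e i j := have e := congr1 (fun M : 'M[R]_3 => M i j) HM1; rewrite /= mulmx3E !mxE /= ?mulr1n ?mulr0n in e.
Local Ltac getR e i j := have e := congr1 (fun M : 'M[R]_3 => M i j) HM2; rewrite /= mulmx3E !mxE /= ?mulr1n ?mulr0n in e.

Definition u := g11 + g12.
Definition v := g21 + g22.
Definition y1 := g11 + g21.
Definition y2 := g12 + g22.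

Lemma hF1 : m00 * (1 - u - v) = 1.
Proof.
getR r00 o0 o0; getR r01 o0 o1; getR r02 o0 o2.
rewrite /u /v.
ncr [:: m00; m01; m02; a; b; c; d; g11; g12; g21; g22]
  (conj r00 (conj r01 (conj r02 (conj G1 (conj G2 (conj G3 (conj G4 I))))))) 2%N 4%N 10000%N.
Qed.

Lemma hF2 : (1 - y1 - y2) * m00 = 1.
Proof.
getL l00 o0 o0; getL l10 o1 o0; getL l20 o2 o0.
rewrite /y1 /y2.
ncr [:: m00; m10; m20; a; b; c; d; g11; g12; g21; g22]
  (conj l00 (conj l10 (conj l20 (conj G5 (conj G6 (conj G7 (conj G8 I))))))) 2%N 4%N 10000%N.
Qed.

Lemma hF3a : m10 = - u * m00.
Proof.
getL l10 o1 o0; getL l20 o2 o0. rewrite /u.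
ncr [:: m00; m10; m20; a; b; c; d; g11; g12; g21; g22]
  (conj l10 (conj l20 (conj G5 (conj G6 (conj G7 (conj G8 I)))))) 2%N 4%N 10000%N.
Qed.
Lemma hF3b : m20 = - v * m00.
Proof.
getL l10 o1 o0; getL l20 o2 o0. rewrite /v.
ncr [:: m00; m10; m20; a; b; c; d; g11; g12; g21; g22]
  (conj l10 (conj l20 (conj G5 (conj G6 (conj G7 (conj G8 I)))))) 2%N 4%N 10000%N.
Qed.
Lemma hF4a : m01 = - m00 * y1.
Proof.
getR r01 o0 o1; getR r02 o0 o2. rewrite /y1.
ncr [:: m00; m01; m02; a; b; c; d; g11; g12; g21; g22]
  (conj r01 (conj r02 (conj G1 (conj G2 (conj G3 (conj G4 I)))))) 2%N 4%N 10000%N.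
Qed.
Lemma hF4b : m02 = - m00 * y2.
Proof.
getR r01 o0 o1; getR r02 o0 o2. rewrite /y2.
ncr [:: m00; m01; m02; a; b; c; d; g11; g12; g21; g22]
  (conj r01 (conj r02 (conj G1 (conj G2 (conj G3 (conj G4 I)))))) 2%N 4%N 10000%N.
Qed.

Lemma hF9a : m01 = (d-1)^-1 * (c-d) * m11.
Proof.
getL l01 o0 o1; getL l21 o2 o1.
ncr [:: m01; m11; m21; a; b; c; d; (d-1)^-1] (conj l01 (conj l21 (conj (mulrV Ud1) (conj (mulVr Ud1) I)))) 3%N 4%N 10000%N.
Qed.
Lemma hF9b : m01 = (c-1)^-1 * (d-c) * m21.
Proof.
getL l01 o0 o1; getL l21 o2 o1.
ncr [:: m01; m11; m21; a; b; c; d; (c-1)^-1] (conj l01 (conj l21 (conj (mulrV Uc1) (conj (mulVr Uc1) I)))) 3%N 4%N 10000%N.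
Qed.
Lemma hF9c : m02 = (b-1)^-1 * (a-b) * m12.
Proof.
getL l02 o0 o2; getL l12 o1 o2.
ncr [:: m02; m12; m22; a; b; c; d; (b-1)^-1] (conj l02 (conj l12 (conj (mulrV Ub1) (conj (mulVr Ub1) I)))) 3%N 4%N 10000%N.
Qed.
Lemma hF9d : m02 = (a-1)^-1 * (b-a) * m22.
Proof.
getL l02 o0 o2; getL l12 o1 o2.
ncr [:: m02; m12; m22; a; b; c; d; (a-1)^-1] (conj l02 (conj l12 (conj (mulrV Ua1) (conj (mulVr Ua1) I)))) 3%N 4%N 10000%N.
Qed.
Lemma hF10a : m10 = m11 * (b-d) * (d-1)^-1.
Proof.
getR r10 o1 o0; getR r12 o1 o2.
ncr [:: m10; m11; m12; a; b; c; d; (d-1)^-1] (conj r10 (conj r12 (conj (mulrV Ud1) (conj (mulVr Ud1) I)))) 3%N 4%N 10000%N.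
Qed.
Lemma hF10b : m10 = m12 * (d-b) * (b-1)^-1.
Proof.
getR r10 o1 o0; getR r12 o1 o2.
ncr [:: m10; m11; m12; a; b; c; d; (b-1)^-1] (conj r10 (conj r12 (conj (mulrV Ub1) (conj (mulVr Ub1) I)))) 3%N 4%N 10000%N.
Qed.
Lemma hF10c : m20 = m21 * (a-c) * (c-1)^-1.
Proof.
getR r20 o2 o0; getR r21 o2 o1.
ncr [:: m20; m21; m22; a; b; c; d; (c-1)^-1] (conj r20 (conj r21 (conj (mulrV Uc1) (conj (mulVr Uc1) I)))) 3%N 4%N 10000%N.
Qed.
Lemma hF10d : m20 = m22 * (c-a) * (a-1)^-1.
Proof.
getR r20 o2 o0; getR r21 o2 o1.
ncr [:: m20; m21; m22; a; b; c; d; (a-1)^-1] (conj r20 (conj r21 (conj (mulrV Ua1) (conj (mulVr Ua1) I)))) 3%N 4%N 10000%N.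
Qed.

Lemma hU11 : m11 \is a GRing.unit.
Proof.
apply/unitrP; exists ((a-1) - (b-1)*(d-1)^-1*(c-1)); split.
  getL l01 o0 o1; getL l11 o1 o1; getL l21 o2 o1.
  ncr [:: m01; m11; m21; a; b; c; d; (d-1)^-1] (conj l01 (conj l11 (conj l21 (conj (mulrV Ud1) (conj (mulVr Ud1) I))))) 3%N 5%N 10000%N.
getR r10 o1 o0; getR r11 o1 o1; getR r12 o1 o2.
ncr [:: m10; m11; m12; a; b; c; d; (d-1)^-1] (conj r10 (conj r11 (conj r12 (conj (mulrV Ud1) (conj (mulVr Ud1) I))))) 3%N 5%N 10000%N.
Qed.
Lemma hU22 : m22 \is a GRing.unit.
Proof.
apply/unitrP; exists ((d-1) - (c-1)*(a-1)^-1*(b-1)); split.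
  getL l02 o0 o2; getL l12 o1 o2; getL l22 o2 o2.
  ncr [:: m02; m12; m22; a; b; c; d; (a-1)^-1] (conj l02 (conj l12 (conj l22 (conj (mulrV Ua1) (conj (mulVr Ua1) I))))) 3%N 5%N 10000%N.
getR r20 o2 o0; getR r21 o2 o1; getR r22 o2 o2.
ncr [:: m20; m21; m22; a; b; c; d; (a-1)^-1] (conj r20 (conj r21 (conj r22 (conj (mulrV Ua1) (conj (mulVr Ua1) I))))) 3%N 5%N 10000%N.
Qed.
Lemma hU12 : m12 \is a GRing.unit.
Proof.
apply/unitrP; exists ((c-1) - (d-1)*(b-1)^-1*(a-1)); split.
  getL l02 o0 o2; getL l12 o1 o2; getL l22 o2 o2.
  ncr [:: m02; m12; m22; a; b; c; d; (b-1)^-1] (conj l02 (conj l12 (conj l22 (conj (mulrV Ub1) (conj (mulVr Ub1) I))))) 3%N 5%N 10000%N.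
getR r10 o1 o0; getR r11 o1 o1; getR r12 o1 o2.
ncr [:: m10; m11; m12; a; b; c; d; (b-1)^-1] (conj r10 (conj r11 (conj r12 (conj (mulrV Ub1) (conj (mulVr Ub1) I))))) 3%N 5%N 10000%N.
Qed.
Lemma hU21 : m21 \is a GRing.unit.
Proof.
apply/unitrP; exists ((b-1) - (a-1)*(c-1)^-1*(d-1)); split.
  getL l01 o0 o1; getL l11 o1 o1; getL l21 o2 o1.
  ncr [:: m01; m11; m21; a; b; c; d; (c-1)^-1] (conj l01 (conj l11 (conj l21 (conj (mulrV Uc1) (conj (mulVr Uc1) I))))) 3%N 5%N 10000%N.
getR r20 o2 o0; getR r21 o2 o1; getR r22 o2 o2.
ncr [:: m20; m21; m22; a; b; c; d; (c-1)^-1] (conj r20 (conj r21 (conj r22 (conj (mulrV Uc1) (conj (mulVr Uc1) I))))) 3%N 5%N 10000%N.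
Qed.

Lemma hU00 : m00 \is a GRing.unit.
Proof.
apply/unitrP; exists (1 - u - v); split; last exact: hF1.
have E1 : (1 - y1 - y2) * m00 * (1 - u - v) = 1 - u - v by rewrite hF2 mul1r.
have E2 : (1 - y1 - y2) * m00 * (1 - u - v) = 1 - y1 - y2 by rewrite -mulrA hF1 mulr1.
have E : 1 - u - v = 1 - y1 - y2 by rewrite -E1 E2.
by rewrite E hF2.
Qed.
Lemma hUd1 : (d-1)^-1 \is a GRing.unit. Proof. by rewrite unitrV. Qed.
Lemma hUc1 : (c-1)^-1 \is a GRing.unit. Proof. by rewrite unitrV. Qed.
Lemma hUb1 : (b-1)^-1 \is a GRing.unit. Proof. by rewrite unitrV. Qed.
Lemma hUa1 : (a-1)^-1 \is a GRing.unit. Proof. by rewrite unitrV. Qed.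
Lemma hU01 : m01 \is a GRing.unit.
Proof. by rewrite hF9a !uM // ?hUd1 ?hU11 // uN. Qed.
Lemma hU02 : m02 \is a GRing.unit.
Proof. by rewrite hF9d !uM // ?hUa1 ?hU22 //. Qed.
Lemma hU10 : m10 \is a GRing.unit.
Proof. by rewrite hF10a !uM // ?hUd1 ?hU11 // uN. Qed.
Lemma hU20 : m20 \is a GRing.unit.
Proof. by rewrite hF10d !uM // ?hUa1 ?hU22 //. Qed.
Lemma hUy1 : y1 \is a GRing.unit.
Proof.
have -> : y1 = - (m00^-1 * m01) by rewrite hF4a mulNr mulrN opprK mulrA mulVr ?mul1r // hU00.
by rewrite unitrN uM // ?unitrV ?hU00 // hU01.
Qed.
Lemma hUy2 : y2 \is a GRing.unit.
Proof.
have -> : y2 = - (m00^-1 * m02) by rewrite hF4b mulNr mulrN opprK mulrA mulVr ?mul1r // hU00.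
by rewrite unitrN uM // ?unitrV ?hU00 // hU02.
Qed.

Lemma hall : all_units m.
Proof.
move=> j k; move: j; apply: ord3P; move: k; apply: ord3P;
  by [exact: hU00 | exact: hU01 | exact: hU02 | exact: hU10 | exact: hU11 | exact: hU12
     | exact: hU20 | exact: hU21 | exact: hU22].
Qed.

Lemma hPhi : J2 (LambdaL m) = hatmx ((d-1)^-1*(c-d)*(-u)) ((c-1)^-1*(d-c)*(-v))
                                   ((b-1)^-1*(a-b)*(-u)) ((a-1)^-1*(b-a)*(-v)).
Proof.
have Ux := hall.
have E10 : m10 * m00^-1 = - u by rewrite hF3a mulrK // hU00.
have E20 : m20 * m00^-1 = - v by rewrite hF3b mulrK // hU00.
apply/matrixP => j k; rewrite !mxE zo.
move: j k; apply: ord3P; apply: ord3P => /=;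
  rewrite ?mulrK ?mulrVK ?divrr ?invr1 ?mulrV ?hall //;
  rewrite inv4 ?hall // -mulrA ?E10 ?E20; congr (_ * _).
- by rewrite {1}hF9a mulrK // hU11.
- by rewrite {1}hF9b mulrK // hU21.
- by rewrite {1}hF9c mulrK // hU12.
- by rewrite {1}hF9d mulrK // hU22.
Qed.

Lemma hLR : LambdaR m = hatmx ((d-1)*(b-d)^-1*(- y1^-1)) ((b-1)*(d-b)^-1*(- y2^-1))
                             ((c-1)*(a-c)^-1*(- y1^-1)) ((a-1)*(c-a)^-1*(- y2^-1)).
Proof.
have Ux := hall.
have E01 : m01^-1 * m00 = - y1^-1.
  by rewrite hF4a mulNr invrN invrM ?hU00 ?hUy1 // mulNr -mulrA mulVr ?hU00 ?mulr1.
have E02 : m02^-1 * m00 = - y2^-1.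
  by rewrite hF4b mulNr invrN invrM ?hU00 ?hUy2 // mulNr -mulrA mulVr ?hU00 ?mulr1.
have K : forall x y z : R, x \is a GRing.unit -> y \is a GRing.unit -> z \is a GRing.unit ->
    (x * y * z^-1)^-1 * x = z * y^-1.
  move=> x y z Ux' Uy Uz.
  by rewrite invrM ?uM ?unitrV // invrK invrM // -!mulrA mulVr ?mulr1.
apply/matrixP => j k; rewrite !mxE zo.
move: j k; apply: ord3P; apply: ord3P => /=;
  rewrite ?mulrK ?mulrVK ?divrr ?invr1 ?mulrV ?mulVr ?hall // ?mul1r ?mulVr ?hall //;
  rewrite -mulrA ?E01 ?E02; congr (_ * _).
- by rewrite {1}hF10a K // ?hU11 // uN.
- by rewrite {1}hF10b K // ?hU12 //.
- by rewrite {1}hF10c K // ?hU21 // uN.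
- by rewrite {1}hF10d K // ?hU22 //.
Qed.

Lemma hNM : [/\ (a-1) * m11 + (b-1) * m21 = 1, (a-1) * m12 + (b-1) * m22 = 0,
               (c-1) * m11 + (d-1) * m21 = 0 & (c-1) * m12 + (d-1) * m22 = 1] /\
            [/\ m11 * (a-1) + m12 * (c-1) = 1, m11 * (b-1) + m12 * (d-1) = 0,
               m21 * (a-1) + m22 * (c-1) = 0 & m21 * (b-1) + m22 * (d-1) = 1].
Proof using All.
getL l01 o0 o1; getL l11 o1 o1; getL l21 o2 o1; getL l02 o0 o2; getL l12 o1 o2; getL l22 o2 o2.
getR r10 o1 o0; getR r11 o1 o1; getR r12 o1 o2; getR r20 o2 o0; getR r21 o2 o1; getR r22 o2 o2.
split; split;
ncr [:: m01; m11; m21; m02; m12; m22; m10; m20; a; b; c; d]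
  (conj l01 (conj l11 (conj l21 (conj l02 (conj l12 (conj l22 (conj r10 (conj r11 (conj r12
   (conj r20 (conj r21 (conj r22 I)))))))))))) 1%N 4%N 10000%N.
Qed.

Lemma hratio : [/\ (d-1)^-1 * (c-d) = m01 * m11^-1, (c-1)^-1 * (d-c) = m01 * m21^-1,
                   (b-1)^-1 * (a-b) = m02 * m12^-1 & (a-1)^-1 * (b-a) = m02 * m22^-1].
Proof using All.
split.
- by rewrite {1}hF9a mulrK // hU11.
- by rewrite {1}hF9b mulrK // hU21.
- by rewrite {1}hF9c mulrK // hU12.
- by rewrite {1}hF9d mulrK // hU22.
Qed.

Lemma hsig : (1 - u - v) * m00 = 1 /\ m00 * (1 - u - v) = 1.
Proof using All.
split; last exact: hF1.
have E1 : (1 - y1 - y2) * m00 * (1 - u - v) = 1 - u - v by rewrite hF2 mul1r.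
have E2 : (1 - y1 - y2) * m00 * (1 - u - v) = 1 - y1 - y2 by rewrite -mulrA hF1 mulr1.
by rewrite -E1 E2 hF2.
Qed.

Lemma huv : u \is a GRing.unit /\ v \is a GRing.unit.
Proof using All.
have U0 : m00^-1 \is a GRing.unit by rewrite unitrV hU00.
split.
  have -> : u = - (m10 * m00^-1) by rewrite hF3a mulrK ?opprK // hU00.
  by rewrite unitrN uM // hU10.
have -> : v = - (m20 * m00^-1) by rewrite hF3b mulrK ?opprK // hU00.
by rewrite unitrN uM // hU20.
Qed.

Lemma hQ : ((b-1) - (a-1)*(c-1)^-1*(d-1)) \is a GRing.unit /\
           ((c-1) - (d-1)*(b-1)^-1*(a-1)) \is a GRing.unit.
Proof using All.
split.
  apply/unitrP; exists m21; split.
    getR r20 o2 o0; getR r21 o2 o1; getR r22 o2 o2.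
    ncr [:: m20; m21; m22; a; b; c; d; (c-1)^-1] (conj r20 (conj r21 (conj r22 (conj (mulrV Uc1) (conj (mulVr Uc1) I))))) 3%N 5%N 10000%N.
  getL l01 o0 o1; getL l11 o1 o1; getL l21 o2 o1.
  ncr [:: m01; m11; m21; a; b; c; d; (c-1)^-1] (conj l01 (conj l11 (conj l21 (conj (mulrV Uc1) (conj (mulVr Uc1) I))))) 3%N 5%N 10000%N.
apply/unitrP; exists m12; split.
  getR r10 o1 o0; getR r11 o1 o1; getR r12 o1 o2.
  ncr [:: m10; m11; m12; a; b; c; d; (b-1)^-1] (conj r10 (conj r11 (conj r12 (conj (mulrV Ub1) (conj (mulVr Ub1) I))))) 3%N 5%N 10000%N.
getL l02 o0 o2; getL l12 o1 o2; getL l22 o2 o2.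
ncr [:: m02; m12; m22; a; b; c; d; (b-1)^-1] (conj l02 (conj l12 (conj l22 (conj (mulrV Ub1) (conj (mulVr Ub1) I))))) 3%N 5%N 10000%N.
Qed.

Lemma hpack_units : all_units m. Proof using All. exact: hall. Qed.
Lemma hpack_phi : J2 (LambdaL m) = hatmx ((d-1)^-1*(c-d)*(-u)) ((c-1)^-1*(d-c)*(-v))
                                   ((b-1)^-1*(a-b)*(-u)) ((a-1)^-1*(b-a)*(-v)).
Proof using All. exact: hPhi. Qed.
Lemma hpack_lr : LambdaR m = hatmx ((d-1)*(b-d)^-1*(- y1^-1)) ((b-1)*(d-b)^-1*(- y2^-1))
                             ((c-1)*(a-c)^-1*(- y1^-1)) ((a-1)*(c-a)^-1*(- y2^-1)).
Proof using All. exact: hLR. Qed.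
End Hat.


Definition mx3 (R : Type) (x00 x01 x02 x10 x11 x12 x20 x21 x22 : R) : 'M[R]_3 :=
  \matrix_(i, j) match nat_of_ord i, nat_of_ord j with
                 | 0, 0 => x00 | 0, 1 => x01 | 0, _ => x02
                 | 1, 0 => x10 | 1, 1 => x11 | 1, _ => x12
                 | _, 0 => x20 | _, 1 => x21 | _, _ => x22 end.

Definition p0 : 'I_2 := @Ordinal 2 0 isT.
Definition p1 : 'I_2 := @Ordinal 2 1 isT.

Lemma mulmx2E (R : pzRingType) (X Y : 'M[R]_2) i j :
  (X *m Y) i j = X i p0 * Y p0 j + X i p1 * Y p1 j.
Proof.
rewrite mxE !big_ord_recl big_ord0 addr0.
have -> : (lift (ord0 : 'I_2) ord0) = p1 by apply/val_inj.
have -> : (ord0 : 'I_2) = p0 by apply/val_inj.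
by [].
Qed.

Section Infra.
Variable R : unitRingType.

Lemma minv_spec n (M : 'M[R]_n) : mx_invertible M -> M *m minv M = 1%:M /\ minv M *m M = 1%:M.
Proof. move=> H; exact: (epsilon_spec (inhabits M) (fun B => M *m B = 1%:M /\ B *m M = 1%:M) H). Qed.

Lemma inv2_eqs (M : 'M[R]_2) : mx_invertible M -> exists n11 n12 n21 n22 : R,
  [/\ M p0 p0 * n11 + M p0 p1 * n21 = 1, M p0 p0 * n12 + M p0 p1 * n22 = 0,
      M p1 p0 * n11 + M p1 p1 * n21 = 0 & M p1 p0 * n12 + M p1 p1 * n22 = 1] /\
  [/\ n11 * M p0 p0 + n12 * M p1 p0 = 1, n11 * M p0 p1 + n12 * M p1 p1 = 0,
      n21 * M p0 p0 + n22 * M p1 p0 = 0 & n21 * M p0 p1 + n22 * M p1 p1 = 1].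
Proof.
case=> N [H1 H2]; exists (N p0 p0), (N p0 p1), (N p1 p0), (N p1 p1).
have e := fun i j => congr1 (fun X : 'M[R]_2 => X i j) H1.
have f := fun i j => congr1 (fun X : 'M[R]_2 => X i j) H2.
move: (e p0 p0) (e p0 p1) (e p1 p0) (e p1 p1) (f p0 p0) (f p0 p1) (f p1 p0) (f p1 p1).
rewrite /= !mulmx2E !mxE /= ?mulr1n ?mulr0n.
by move=> *; split; split.
Qed.

Lemma schur1 (q r s n11 n12 n21 n22 : R) :
  1 * n11 + q * n21 = 1 -> 1 * n12 + q * n22 = 0 -> r * n11 + s * n21 = 0 -> r * n12 + s * n22 = 1 ->
  n11 * 1 + n12 * r = 1 -> n11 * q + n12 * s = 0 -> n21 * 1 + n22 * r = 0 -> n21 * q + n22 * s = 1 ->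
  s - r * q \is a GRing.unit.
Proof.
move=> H1 H2 H3 H4 H5 H6 H7 H8; apply/unitrP; exists n22; split.
  ncr [:: q; r; s; n11; n12; n21; n22] (conj H5 (conj H6 (conj H7 (conj H8 I)))) 2%N 4%N 1000%N.
ncr [:: q; r; s; n11; n12; n21; n22] (conj H1 (conj H2 (conj H3 (conj H4 I)))) 2%N 4%N 1000%N.
Qed.

Definition f2 (r1 r2 : 'I_3) : 'I_2 -> 'I_3 := fun i => if i == p0 then r1 else r2.
Lemma f2_inj r1 r2 : r1 != r2 -> injective (f2 r1 r2).
Proof.
move=> Hne i j; rewrite /f2.
have Hp : forall k : 'I_2, k != p0 -> k = p1.
  by case=> [[|[|n]] Hn] // _; apply/val_inj.
case: (i =P p0) => [->|/eqP Hi]; case: (j =P p0) => [->|/eqP Hj] //.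
- by move=> E; move: Hne; rewrite E eqxx.
- by move=> E; move: Hne; rewrite E eqxx.
- by rewrite (Hp _ Hi) (Hp _ Hj).
Qed.

Lemma minor2 (M : 'M[R]_3) (r1 r2 c1 c2 : 'I_3) : r1 != r2 -> c1 != c2 ->
  (forall (k : nat) (f g : 'I_k -> 'I_3), injective f -> injective g ->
     mx_invertible (\matrix_(i, j) M (f i) (g j))) ->
  mx_invertible (\matrix_(i, j) M (f2 r1 r2 i) (f2 c1 c2 j)).
Proof. by move=> Hr Hc H; apply: H; apply: f2_inj. Qed.


Lemma hat_inv (a b c d n11 n12 n21 n22 : R) :
  (a - 1) * n11 + (b - 1) * n21 = 1 -> (a - 1) * n12 + (b - 1) * n22 = 0 ->
  (c - 1) * n11 + (d - 1) * n21 = 0 -> (c - 1) * n12 + (d - 1) * n22 = 1 ->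
  n11 * (a - 1) + n12 * (c - 1) = 1 -> n11 * (b - 1) + n12 * (d - 1) = 0 ->
  n21 * (a - 1) + n22 * (c - 1) = 0 -> n21 * (b - 1) + n22 * (d - 1) = 1 ->
  mx_invertible (hatmx a b c d).
Proof.
move=> H1 H2 H3 H4 H5 H6 H7 H8.
exists (mx3 (1 + n11 + n12 + n21 + n22) (-(n11+n21)) (-(n12+n22)) (-(n11+n12)) n11 n12
            (-(n21+n22)) n21 n22).
split; apply/matrixP => i j; rewrite mulmx3E !mxE; move: i j; apply: ord3P; apply: ord3P => /=;
  rewrite ?mulr1n ?mulr0n;
  ncr [:: a; b; c; d; n11; n12; n21; n22]
    (conj H1 (conj H2 (conj H3 (conj H4 (conj H5 (conj H6 (conj H7 (conj H8 I)))))))) 2%N 4%N 10000%N.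
Qed.
End Infra.


Section E2.
Variable R : unitRingType.
Variables z11 z12 z21 z22 w11 w12 w21 w22 : R.
Hypotheses (H1 : z11 * w11 + z12 * w21 = 1) (H2 : z11 * w12 + z12 * w22 = 0)
           (H3 : z21 * w11 + z22 * w21 = 0) (H4 : z21 * w12 + z22 * w22 = 1)
           (H5 : w11 * z11 + w12 * z21 = 1) (H6 : w11 * z12 + w12 * z22 = 0)
           (H7 : w21 * z11 + w22 * z21 = 0) (H8 : w21 * z12 + w22 * z22 = 1).
Hypotheses (U11 : z11 \is a GRing.unit) (U12 : z12 \is a GRing.unit)
           (U21 : z21 \is a GRing.unit) (U22 : z22 \is a GRing.unit).
Let y11 := z11^-1. Let y12 := z21^-1. Let y21 := z12^-1. Let y22 := z22^-1.
Let v11 := - (z12 * w22 * z21). Let v12 := z12 * w22 * z22.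
Let v21 := z22 * w22 * z21. Let v22 := z22 - z22 * w22 * z22.
Ltac go := rewrite /y11 /y12 /y21 /y22 /v11 /v12 /v21 /v22;
  ncr [:: z11; z12; z21; z22; w11; w12; w21; w22; z11^-1; z12^-1; z21^-1; z22^-1]
    (conj H1 (conj H2 (conj H3 (conj H4 (conj H5 (conj H6 (conj H7 (conj H8
     (conj (mulrV U11) (conj (mulVr U11) (conj (mulrV U12) (conj (mulVr U12)
     (conj (mulrV U21) (conj (mulVr U21) (conj (mulrV U22) (conj (mulVr U22) I))))))))))))))))
    3%N 6%N 100000%N.
Lemma E2pack : [/\ y11 * v11 + y12 * v21 = 1, y11 * v12 + y12 * v22 = 0, y21 * v11 + y22 * v21 = 0 & y21 * v12 + y22 * v22 = 1] /\ [/\ v11 * y11 + v12 * y21 = 1, v11 * y12 + v12 * y22 = 0, v21 * y11 + v22 * y21 = 0 & v21 * y12 + v22 * y22 = 1].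
Proof using All. split; split; go. Qed.
Lemma E2a : y11 * v11 + y12 * v21 = 1. Proof. go. Qed.
Lemma E2b : y11 * v12 + y12 * v22 = 0. Proof. go. Qed.
Lemma E2c : y21 * v11 + y22 * v21 = 0. Proof. go. Qed.
Lemma E2d : y21 * v12 + y22 * v22 = 1. Proof. go. Qed.
Lemma E2e : v11 * y11 + v12 * y21 = 1. Proof. go. Qed.
Lemma E2f : v11 * y12 + v12 * y22 = 0. Proof. go. Qed.
Lemma E2g : v21 * y11 + v22 * y21 = 0. Proof. go. Qed.
Lemma E2h : v21 * y12 + v22 * y22 = 1. Proof. go. Qed.
End E2.


Lemma inv_eq (R : unitRingType) (x y : R) : y * x = 1 -> x * y = 1 -> x^-1 = y.
Proof.
move=> H1 H2; have Ux : x \is a GRing.unit by apply/unitrP; exists y.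
by rewrite -[x^-1]mulr1 -H2 mulrA mulVr // mul1r.
Qed.

Section S1.
Variable R : unitRingType.
Variables (u v a b c d Fa Fb Fc Fd Pa Pb Pc Pd g1 g2 : R).
Hypotheses (Ha1 : a * (1 - Fa) = 1) (Ha2 : (1 - Fa) * a = 1)
           (Hb1 : b * (1 - Fb) = 1) (Hb2 : (1 - Fb) * b = 1)
           (Hc1 : c * (1 - Fc) = 1) (Hc2 : (1 - Fc) * c = 1)
           (Hd1 : d * (1 - Fd) = 1) (Hd2 : (1 - Fd) * d = 1).
Hypotheses (Pa1 : Fa * Pa = 1) (Pa2 : Pa * Fa = 1) (Pb1 : Fb * Pb = 1) (Pb2 : Pb * Fb = 1)
           (Pc1 : Fc * Pc = 1) (Pc2 : Pc * Fc = 1) (Pd1 : Fd * Pd = 1) (Pd2 : Pd * Fd = 1).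
Hypotheses (Su : a * u + b * v = 1) (Sv : c * u + d * v = 1).
Hypotheses (g11 : (Fa * Pb - Fc * Pd) * g1 = 1) (g12 : g1 * (Fa * Pb - Fc * Pd) = 1)
           (g21 : (Fd * Pc - Fb * Pa) * g2 = 1) (g22 : g2 * (Fd * Pc - Fb * Pa) = 1).
Lemma S1 : - g1 * (Fc - Fa) + g2 * (Fd - Fb) + (u + v - 1) * (- Pd * g1 * (Fc - Fa) + Pc * g2 * (Fd - Fb))
           = (1 - Fa * Pb) * g1 * (1 - Fc * Pd) * (d - b) * v.
Proof.
ncr [:: u; v; a; b; c; d; Fa; Fb; Fc; Fd; Pa; Pb; Pc; Pd; g1; g2]
  (conj Ha1 (conj Ha2 (conj Hb1 (conj Hb2 (conj Hc1 (conj Hc2 (conj Hd1 (conj Hd2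
  (conj Pa1 (conj Pa2 (conj Pb1 (conj Pb2 (conj Pc1 (conj Pc2 (conj Pd1 (conj Pd2
  (conj Su (conj Sv (conj g11 (conj g12 (conj g21 (conj g22 I)))))))))))))))))))))) 7%N 6%N 100000%N.
Qed.
Lemma S2 : (Pb - Pd) * (- g1 * (Fc - Fa)) + (Pa - Pc) * (g2 * (Fd - Fb)) = 0.
Proof.
ncr [:: Fa; Fb; Fc; Fd; Pa; Pb; Pc; Pd; g1; g2]
  (conj Pa1 (conj Pa2 (conj Pb1 (conj Pb2 (conj Pc1 (conj Pc2 (conj Pd1 (conj Pd2
  (conj g11 (conj g12 (conj g21 (conj g22 I)))))))))))) 7%N 7%N 100000%N.
Qed.
End S1.

Section Fin.
Variable R : unitRingType.
Variables (a b c d g11 g12 g21 g22 : R).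
Hypotheses (Ua : a \is a GRing.unit) (Ub : b \is a GRing.unit) (Uc : c \is a GRing.unit) (Ud : d \is a GRing.unit).
Hypotheses (Ua1 : a - 1 \is a GRing.unit) (Ub1 : b - 1 \is a GRing.unit)
           (Uc1 : c - 1 \is a GRing.unit) (Ud1 : d - 1 \is a GRing.unit).
Hypotheses (Uba : b - a \is a GRing.unit) (Udc : d - c \is a GRing.unit)
           (Uca : c - a \is a GRing.unit) (Udb : d - b \is a GRing.unit).
Hypotheses (G1 : a * g11 + b * g21 = 1) (G2 : a * g12 + b * g22 = 0)
           (G3 : c * g11 + d * g21 = 0) (G4 : c * g12 + d * g22 = 1)
           (G5 : g11 * a + g12 * c = 1) (G6 : g11 * b + g12 * d = 0)
           (G7 : g21 * a + g22 * c = 0) (G8 : g21 * b + g22 * d = 1).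

Hypothesis UQ12 : (c^-1 - 1) - (a^-1 - 1)*(b^-1 - 1)^-1*(d^-1 - 1) \is a GRing.unit.
Hypothesis UQ21 : (b^-1 - 1) - (d^-1 - 1)*(c^-1 - 1)^-1*(a^-1 - 1) \is a GRing.unit.
Let u := g11 + g12.
Let v := g21 + g22.
Let Dl := d * (d - b)^-1 - c * (c - a)^-1.

Lemma Su : a * u + b * v = 1.
Proof. by rewrite /u /v !mulrDr addrACA G1 G2 addr0. Qed.
Lemma Sv : c * u + d * v = 1.
Proof. by rewrite /u /v !mulrDr addrACA G3 G4 add0r. Qed.

Lemma Dl_inv : Dl * ((d - b) * v) = 1 /\ ((d - b) * v) * Dl = 1.
Proof.
have Su := Su; have Sv := Sv.
rewrite /Dl /v; split;
ncr [:: a; b; c; d; g11; g12; g21; g22; (d-b)^-1; (c-a)^-1]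
  (conj G1 (conj G2 (conj G3 (conj G4 (conj G5 (conj G6 (conj G7 (conj G8
  (conj (mulrV Udb) (conj (mulVr Udb) (conj (mulrV Uca) (conj (mulVr Uca) I)))))))))))) 3%N 5%N 100000%N.
Qed.

Let Fa := 1 - a^-1. Let Fb := 1 - b^-1. Let Fc := 1 - c^-1. Let Fd := 1 - d^-1.
Lemma UF (x : R) : x \is a GRing.unit -> x - 1 \is a GRing.unit -> 1 - x^-1 \is a GRing.unit.
Proof.
move=> Ux Ux1; have -> : 1 - x^-1 = (x - 1) * x^-1 by rewrite mulrBl mulrV // mul1r.
by rewrite unitrMl // unitrV.
Qed.
Lemma UFa : Fa \is a GRing.unit. Proof. exact: UF. Qed.
Lemma UFb : Fb \is a GRing.unit. Proof. exact: UF. Qed.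
Lemma UFc : Fc \is a GRing.unit. Proof. exact: UF. Qed.
Lemma UFd : Fd \is a GRing.unit. Proof. exact: UF. Qed.
Lemma XF (x : R) : x \is a GRing.unit -> x * (1 - (1 - x^-1)) = 1 /\ (1 - (1 - x^-1)) * x = 1.
Proof. by move=> Ux; rewrite opprB addrCA subrr addr0 mulrV // mulVr. Qed.

Let GG1 := Fa * Fb^-1 - Fc * Fd^-1.
Let GG2 := Fd * Fc^-1 - Fb * Fa^-1.
Lemma UG1 : GG1 \is a GRing.unit.
Proof.
have E : (b^-1 - 1)^-1 = - Fb^-1 by rewrite -invrN opprB.
have -> : GG1 = ((c^-1 - 1) - (a^-1 - 1)*(b^-1 - 1)^-1*(d^-1 - 1)) * Fd^-1.
  rewrite E /GG1 /Fa /Fb /Fc /Fd.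
  have Ud' := UFd; rewrite /Fd in Ud'.
  ncr [:: a^-1; b^-1; c^-1; d^-1; (1 - b^-1)^-1; (1 - d^-1)^-1]
    (conj (mulrV Ud') (conj (mulVr Ud') I)) 2%N 4%N 10000%N.
by rewrite unitrMl // unitrV UFd.
Qed.
Lemma UG2 : GG2 \is a GRing.unit.
Proof.
have E : (c^-1 - 1)^-1 = - Fc^-1 by rewrite -invrN opprB.
have -> : GG2 = ((b^-1 - 1) - (d^-1 - 1)*(c^-1 - 1)^-1*(a^-1 - 1)) * Fa^-1.
  rewrite E /GG2 /Fa /Fb /Fc /Fd.
  have Ua' := UFa; rewrite /Fa in Ua'.
  ncr [:: a^-1; b^-1; c^-1; d^-1; (1 - c^-1)^-1; (1 - a^-1)^-1]
    (conj (mulrV Ua') (conj (mulVr Ua') I)) 2%N 4%N 10000%N.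
by rewrite unitrMl // unitrV UFa.
Qed.

Let q := (b - 1) * (b - a)^-1 * a.
Let p := (d - 1) * (d - c)^-1 * c.
Let W := q - p.
Ltac invs x := let H := fresh in have H : x \is a GRing.unit; [|exact (conj (mulrV H) (conj (mulVr H) I))].

Lemma qinv : q * (1 - Fa * Fb^-1) = 1 /\ (1 - Fa * Fb^-1) * q = 1.
Proof.
have UFa' := UFa; have UFb' := UFb; rewrite /Fa /Fb in UFa' UFb' *; rewrite /q.
split; ncr [:: a; b; a^-1; b^-1; (b-1)^-1; (b-a)^-1; (1-b^-1)^-1]
  (conj (mulrV Ua) (conj (mulVr Ua) (conj (mulrV Ub) (conj (mulVr Ub)
  (conj (mulrV Ub1) (conj (mulVr Ub1) (conj (mulrV Uba) (conj (mulVr Uba)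
  (conj (mulrV UFb') (conj (mulVr UFb') I)))))))))) 3%N 6%N 100000%N.
Qed.

Lemma pinv : p * (1 - Fc * Fd^-1) = 1 /\ (1 - Fc * Fd^-1) * p = 1.
Proof.
have UFc' := UFc; have UFd' := UFd; rewrite /Fc /Fd in UFc' UFd' *; rewrite /p.
split; ncr [:: c; d; c^-1; d^-1; (d-1)^-1; (d-c)^-1; (1-d^-1)^-1]
  (conj (mulrV Uc) (conj (mulVr Uc) (conj (mulrV Ud) (conj (mulVr Ud)
  (conj (mulrV Ud1) (conj (mulVr Ud1) (conj (mulrV Udc) (conj (mulVr Udc)
  (conj (mulrV UFd') (conj (mulVr UFd') I)))))))))) 3%N 6%N 100000%N.
Qed.
Lemma q1inv : (1 - q) * (1 - Fb * Fa^-1) = 1 /\ (1 - Fb * Fa^-1) * (1 - q) = 1.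
Proof.
have UFa' := UFa; have UFb' := UFb; rewrite /Fa /Fb in UFa' UFb' *; rewrite /q.
split; ncr [:: a; b; a^-1; b^-1; (a-1)^-1; (b-1)^-1; (b-a)^-1; (1-a^-1)^-1]
  (conj (mulrV Ua) (conj (mulVr Ua) (conj (mulrV Ub) (conj (mulVr Ub)
  (conj (mulrV Ua1) (conj (mulVr Ua1)
  (conj (mulrV Ub1) (conj (mulVr Ub1) (conj (mulrV Uba) (conj (mulVr Uba)
  (conj (mulrV UFa') (conj (mulVr UFa') I)))))))))))) 3%N 6%N 100000%N.
Qed.
Lemma p1inv : (1 - p) * (1 - Fd * Fc^-1) = 1 /\ (1 - Fd * Fc^-1) * (1 - p) = 1.
Proof.
have UFc' := UFc; have UFd' := UFd; rewrite /Fc /Fd in UFc' UFd' *; rewrite /p.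
split; ncr [:: c; d; c^-1; d^-1; (c-1)^-1; (d-1)^-1; (d-c)^-1; (1-c^-1)^-1]
  (conj (mulrV Uc) (conj (mulVr Uc) (conj (mulrV Ud) (conj (mulVr Ud)
  (conj (mulrV Uc1) (conj (mulVr Uc1)
  (conj (mulrV Ud1) (conj (mulVr Ud1) (conj (mulrV Udc) (conj (mulVr Udc)
  (conj (mulrV UFc') (conj (mulVr UFc') I)))))))))))) 3%N 6%N 100000%N.
Qed.

Lemma Wfact : [/\ W = q * GG1 * p, W = p * GG1 * q, W = (1 - p) * GG2 * (1 - q) & W = (1 - q) * GG2 * (1 - p)].
Proof.
have [q1 q2] := qinv; have [p1 p2] := pinv; have [q3 q4] := q1inv; have [p3 p4] := p1inv.
rewrite /W /GG1 /GG2; split;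
ncr [:: q; p; Fa; Fb; Fc; Fd; Fa^-1; Fb^-1; Fc^-1; Fd^-1]
  (conj q1 (conj q2 (conj p1 (conj p2 (conj q3 (conj q4 (conj p3 (conj p4 I)))))))) 2%N 5%N 100000%N.
Qed.
Lemma UW : W \is a GRing.unit.
Proof.
have [-> _ _ _] := Wfact.
have Uq : q \is a GRing.unit by apply/unitrP; exists (1 - Fa * Fb^-1); rewrite (proj1 qinv) (proj2 qinv).
have Up : p \is a GRing.unit by apply/unitrP; exists (1 - Fc * Fd^-1); rewrite (proj1 pinv) (proj2 pinv).
have UG := UG1. by rewrite unitrMl // unitrMl.
Qed.

Let sg := u + v - 1.
Lemma F1 : [/\ (d-1)^-1*(c-d)*(-u) = 1 + Fd^-1 * sg, (c-1)^-1*(d-c)*(-v) = 1 + Fc^-1 * sg,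
              (b-1)^-1*(a-b)*(-u) = 1 + Fb^-1 * sg & (a-1)^-1*(b-a)*(-v) = 1 + Fa^-1 * sg].
Proof.
have Su := Su; have Sv := Sv.
have xa1 : a * (1 - Fa) = 1 by exact (proj1 (XF Ua)). have xa2 : (1 - Fa) * a = 1 by exact (proj2 (XF Ua)).
have xb1 : b * (1 - Fb) = 1 by exact (proj1 (XF Ub)). have xb2 : (1 - Fb) * b = 1 by exact (proj2 (XF Ub)).
have xc1 : c * (1 - Fc) = 1 by exact (proj1 (XF Uc)). have xc2 : (1 - Fc) * c = 1 by exact (proj2 (XF Uc)).
have xd1 : d * (1 - Fd) = 1 by exact (proj1 (XF Ud)). have xd2 : (1 - Fd) * d = 1 by exact (proj2 (XF Ud)).
have UFa' := UFa; have UFb' := UFb; have UFc' := UFc; have UFd' := UFd.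
rewrite /sg; split.
- ncr [:: u; v; a; b; c; d; Fd; Fd^-1; (d-1)^-1]
    (conj Su (conj Sv (conj xd1 (conj xd2 (conj (mulrV UFd') (conj (mulVr UFd')
    (conj (mulrV Ud1) (conj (mulVr Ud1) I)))))))) 3%N 5%N 100000%N.
- ncr [:: u; v; a; b; c; d; Fc; Fc^-1; (c-1)^-1]
    (conj Su (conj Sv (conj xc1 (conj xc2 (conj (mulrV UFc') (conj (mulVr UFc')
    (conj (mulrV Uc1) (conj (mulVr Uc1) I)))))))) 3%N 5%N 100000%N.
- ncr [:: u; v; a; b; c; d; Fb; Fb^-1; (b-1)^-1]
    (conj Su (conj Sv (conj xb1 (conj xb2 (conj (mulrV UFb') (conj (mulVr UFb')
    (conj (mulrV Ub1) (conj (mulVr Ub1) I)))))))) 3%N 5%N 100000%N.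
- ncr [:: u; v; a; b; c; d; Fa; Fa^-1; (a-1)^-1]
    (conj Su (conj Sv (conj xa1 (conj xa2 (conj (mulrV UFa') (conj (mulVr UFa')
    (conj (mulrV Ua1) (conj (mulVr Ua1) I)))))))) 3%N 5%N 100000%N.
Qed.

Let Ut := - (GG1^-1 * (Fc - Fa) * Dl * W).
Let Vt := GG2^-1 * (Fd - Fb) * Dl * W.
Lemma KS : Ut + Vt + sg * (Fd^-1 * Ut + Fc^-1 * Vt) = 1 /\
           (Fb^-1 - Fd^-1) * Ut + (Fa^-1 - Fc^-1) * Vt = 0.
Proof.
have xa1 : a * (1 - Fa) = 1 by exact (proj1 (XF Ua)). have xa2 : (1 - Fa) * a = 1 by exact (proj2 (XF Ua)).
have xb1 : b * (1 - Fb) = 1 by exact (proj1 (XF Ub)). have xb2 : (1 - Fb) * b = 1 by exact (proj2 (XF Ub)).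
have xc1 : c * (1 - Fc) = 1 by exact (proj1 (XF Uc)). have xc2 : (1 - Fc) * c = 1 by exact (proj2 (XF Uc)).
have xd1 : d * (1 - Fd) = 1 by exact (proj1 (XF Ud)). have xd2 : (1 - Fd) * d = 1 by exact (proj2 (XF Ud)).
have UFa' := UFa; have UFb' := UFb; have UFc' := UFc; have UFd' := UFd.
have UG1' := UG1; have UG2' := UG2.
have E1 := S1 xa1 xa2 xb1 xb2 xc1 xc2 xd1 xd2 (mulrV UFa') (mulVr UFa') (mulrV UFb') (mulVr UFb')
  (mulrV UFc') (mulVr UFc') (mulrV UFd') (mulVr UFd') Su Sv (mulrV UG1') (mulVr UG1') (mulrV UG2') (mulVr UG2').
have E2 := S2 (mulrV UFa') (mulVr UFa') (mulrV UFb') (mulVr UFb')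
  (mulrV UFc') (mulVr UFc') (mulrV UFd') (mulVr UFd') (mulrV UG1') (mulVr UG1') (mulrV UG2') (mulVr UG2').
have [_ D2] := Dl_inv.
have [_ W2 _ _] := Wfact.
have [q1 q2] := qinv; have [p1 p2] := pinv.
rewrite /Ut /Vt /sg; split.
  ncr [:: u; v; b; d; Fa; Fb; Fc; Fd; Fa^-1; Fb^-1; Fc^-1; Fd^-1; GG1; GG1^-1; GG2^-1; Dl; W; q; p]
    (conj E1 (conj D2 (conj W2 (conj (mulrV UG1') (conj (mulVr UG1') (conj q1 (conj q2 (conj p1 (conj p2 I))))))))) 2%N 8%N 100000%N.
ncr [:: Fa; Fb; Fc; Fd; Fa^-1; Fb^-1; Fc^-1; Fd^-1; GG1^-1; GG2^-1; Dl; W] (conj E2 I) 0%N 8%N 100000%N.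
Qed.

Hypothesis Usg : 1 - u - v \is a GRing.unit.
Lemma Usg' : sg \is a GRing.unit.
Proof.
have -> : sg = - (1 - u - v) by rewrite /sg; ncr [:: u; v] I 0%N 0%N 100%N.
by rewrite unitrN.
Qed.

Let a' := (d-1)^-1*(c-d)*(-u).
Let b' := (c-1)^-1*(d-c)*(-v).
Let c' := (b-1)^-1*(a-b)*(-u).
Let d' := (a-1)^-1*(b-a)*(-v).
Lemma primes1 : [/\ a' - 1 = Fd^-1 * sg, b' - 1 = Fc^-1 * sg, c' - 1 = Fb^-1 * sg & d' - 1 = Fa^-1 * sg].
Proof.
have [E1 E2 E3 E4] := F1.
by rewrite /a' /b' /c' /d' E1 E2 E3 E4; split; rewrite addrC addKr.
Qed.
Lemma fin_primes : sg \is a GRing.unit /\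
  [/\ a' - 1 = Fd^-1 * sg, b' - 1 = Fc^-1 * sg, c' - 1 = Fb^-1 * sg & d' - 1 = Fa^-1 * sg].
Proof using All. split; [exact: Usg' | exact: primes1]. Qed.

Variables (h11 h12 h21 h22 : R).
Hypotheses (H5 : h11 * a' + h12 * c' = 1) (H6 : h11 * b' + h12 * d' = 0)
           (H7 : h21 * a' + h22 * c' = 0) (H8 : h21 * b' + h22 * d' = 1).

Lemma fin_uv : h11 + h12 = sg^-1 * Ut * sg /\ h21 + h22 = sg^-1 * Vt * sg.
Proof.
have [K1 K2] := KS.
have [E1 E2 E3 E4] := F1.
have Us := Usg'.
move: H5 H6 H7 H8; rewrite /a' /b' /c' /d' E1 E2 E3 E4 => H5' H6' H7' H8'.
split;
ncr [:: h11; h12; h21; h22; Fa^-1; Fb^-1; Fc^-1; Fd^-1; sg; sg^-1; Ut; Vt]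
  (conj K1 (conj K2 (conj H5' (conj H6' (conj H7' (conj H8' (conj (mulrV Us) (conj (mulVr Us) I)))))))) 2%N 6%N 100000%N.
Qed.

Lemma Dinv : Dl^-1 = (d - b) * v.
Proof. by have [D1 D2] := Dl_inv; apply: inv_eq. Qed.

Lemma omegaW : omega a b c d = W * sg.
Proof.
have Su := Su; have Sv := Sv.
have [D1 D2] := Dl_inv.
rewrite /omega -/Dl Dinv /W /q /p /sg; rewrite /Dl in D1 D2.
ncr [:: u; v; a; b; c; d; (d-b)^-1; (c-a)^-1; (d-c)^-1; (b-a)^-1]
  (conj Su (conj Sv (conj D1 (conj D2 (conj (mulrV Udb) (conj (mulVr Udb) (conj (mulrV Uca) (conj (mulVr Uca)
  (conj (mulrV Udc) (conj (mulVr Udc) (conj (mulrV Uba) (conj (mulVr Uba) I)))))))))))) 4%N 6%N 100000%N.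
Qed.

Lemma y1inv : (- (b * g22 * c) + d * g22 * c)^-1 = - (a^-1 - c^-1) * Dl.
Proof.
have [D1 D2] := Dl_inv. rewrite /Dl /v in D1 D2 *.
apply: inv_eq;
ncr [:: a; b; c; d; g11; g12; g21; g22; a^-1; c^-1; (d-b)^-1; (c-a)^-1]
  (conj G1 (conj G2 (conj G3 (conj G4 (conj G5 (conj G6 (conj G7 (conj G8
  (conj (mulrV Ua) (conj (mulVr Ua) (conj (mulrV Uc) (conj (mulVr Uc)
  (conj (mulrV Udb) (conj (mulVr Udb) (conj (mulrV Uca) (conj (mulVr Uca) (conj D1 (conj D2 I))))))))))))))))))
  3%N 6%N 100000%N.
Qed.
Lemma y2inv : (b * g22 * d + (d - d * g22 * d))^-1 = (b^-1 - d^-1) * Dl.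
Proof.
have [D1 D2] := Dl_inv. rewrite /Dl /v in D1 D2 *.
apply: inv_eq;
ncr [:: a; b; c; d; g11; g12; g21; g22; b^-1; d^-1; (d-b)^-1; (c-a)^-1]
  (conj G1 (conj G2 (conj G3 (conj G4 (conj G5 (conj G6 (conj G7 (conj G8
  (conj (mulrV Ub) (conj (mulVr Ub) (conj (mulrV Ud) (conj (mulVr Ud)
  (conj (mulrV Udb) (conj (mulVr Udb) (conj (mulrV Uca) (conj (mulVr Uca) (conj D1 (conj D2 I))))))))))))))))))
  3%N 6%N 100000%N.
Qed.

Lemma Ldiff (x y : R) : x \is a GRing.unit -> y \is a GRing.unit -> y - x \is a GRing.unit ->
  x^-1 - y^-1 \is a GRing.unit.
Proof.
move=> Ux Uy Uyx; have -> : x^-1 - y^-1 = x^-1 * (y - x) * y^-1.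
  by rewrite mulrBr mulrBl mulVr // mul1r mulrK.
by rewrite !unitrMl ?unitrV.
Qed.

Lemma Lforms : [/\ (d^-1 - 1) * (c^-1 - d^-1)^-1 = - p, (b^-1 - 1) * (a^-1 - b^-1)^-1 = - q,
                   (c^-1 - 1) * (d^-1 - c^-1)^-1 = - (1 - p) & (a^-1 - 1) * (b^-1 - a^-1)^-1 = - (1 - q)].
Proof.
have U1 : c^-1 - d^-1 \is a GRing.unit by apply: Ldiff.
have U2 : a^-1 - b^-1 \is a GRing.unit by apply: Ldiff.
have U3 : d^-1 - c^-1 \is a GRing.unit by apply: Ldiff => //; apply: uN.
have U4 : b^-1 - a^-1 \is a GRing.unit by apply: Ldiff => //; apply: uN.
rewrite /p /q; split.
- ncr [:: c; d; c^-1; d^-1; (d-1)^-1; (d-c)^-1; (c^-1 - d^-1)^-1]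
    (conj (mulrV Uc) (conj (mulVr Uc) (conj (mulrV Ud) (conj (mulVr Ud) (conj (mulrV Ud1) (conj (mulVr Ud1)
    (conj (mulrV Udc) (conj (mulVr Udc) (conj (mulrV U1) (conj (mulVr U1) I)))))))))) 3%N 6%N 100000%N.
- ncr [:: a; b; a^-1; b^-1; (b-1)^-1; (b-a)^-1; (a^-1 - b^-1)^-1]
    (conj (mulrV Ua) (conj (mulVr Ua) (conj (mulrV Ub) (conj (mulVr Ub) (conj (mulrV Ub1) (conj (mulVr Ub1)
    (conj (mulrV Uba) (conj (mulVr Uba) (conj (mulrV U2) (conj (mulVr U2) I)))))))))) 3%N 6%N 100000%N.
- ncr [:: c; d; c^-1; d^-1; (c-1)^-1; (d-1)^-1; (d-c)^-1; (d^-1 - c^-1)^-1]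
    (conj (mulrV Uc) (conj (mulVr Uc) (conj (mulrV Ud) (conj (mulVr Ud) (conj (mulrV Uc1) (conj (mulVr Uc1)
    (conj (mulrV Ud1) (conj (mulVr Ud1)
    (conj (mulrV Udc) (conj (mulVr Udc) (conj (mulrV U3) (conj (mulVr U3) I)))))))))))) 3%N 6%N 100000%N.
- ncr [:: a; b; a^-1; b^-1; (a-1)^-1; (b-1)^-1; (b-a)^-1; (b^-1 - a^-1)^-1]
    (conj (mulrV Ua) (conj (mulVr Ua) (conj (mulrV Ub) (conj (mulVr Ub) (conj (mulrV Ua1) (conj (mulVr Ua1)
    (conj (mulrV Ub1) (conj (mulVr Ub1)
    (conj (mulrV Uba) (conj (mulVr Uba) (conj (mulrV U4) (conj (mulVr U4) I)))))))))))) 3%N 6%N 100000%N.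
Qed.

Lemma Winv_sg : (W * sg)^-1 = sg^-1 * W^-1.
Proof. by rewrite invrM // ?UW ?Usg'. Qed.

Lemma inv_sg (x : R) : x \is a GRing.unit -> (x^-1 * sg)^-1 = sg^-1 * x.
Proof. by move=> Ux; rewrite invrM ?invrK ?unitrV ?Usg'. Qed.

Lemma fin11 : (omega a b c d)^-1 * ((d^-1 - 1) * (c^-1 - d^-1)^-1 * (- (- (b * g22 * c) + d * g22 * c)^-1))
                * omega a b c d = (d' - 1)^-1 * (c' - d') * (- (h11 + h12)).
Proof.
have [P1 P2 P3 P4] := primes1.
have [L1 L2 L3 L4] := Lforms.
have [U1 U2] := fin_uv.
have [W1 W2 W3 W4] := Wfact.
have [q1 q2] := qinv; have [p1 p2] := pinv.
have UW' := UW; have UG1' := UG1; have Us := Usg'.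
have UFa' := UFa; have UFb' := UFb; have UFc' := UFc; have UFd' := UFd.
have eFa : Fa = 1 - a^-1 by []. have eFc : Fc = 1 - c^-1 by [].
have -> : c' - d' = (c' - 1) - (d' - 1) by rewrite opprB addrA subrK.
rewrite omegaW Winv_sg y1inv L1 U1 P3 P4 inv_sg // /Ut.
ncr [:: sg; sg^-1; W; W^-1; p; q; GG1; GG1^-1; Fa; Fb; Fc; Fd; Fa^-1; Fb^-1; a^-1; c^-1; Dl]
  (conj W2 (conj (mulrV UW') (conj (mulVr UW') (conj (mulrV UG1') (conj (mulVr UG1')
  (conj (mulrV Us) (conj (mulVr Us) (conj q1 (conj q2 (conj (mulrV UFa') (conj (mulVr UFa')
  (conj (mulrV UFb') (conj (mulVr UFb') (conj eFa (conj eFc I))))))))))))))) 3%N 6%N 100000%N.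
Qed.

Lemma fin21 : (omega a b c d)^-1 * ((b^-1 - 1) * (a^-1 - b^-1)^-1 * (- (- (b * g22 * c) + d * g22 * c)^-1))
                * omega a b c d = (b' - 1)^-1 * (a' - b') * (- (h11 + h12)).
Proof.
have [P1 P2 P3 P4] := primes1.
have [L1 L2 L3 L4] := Lforms.
have [U1 U2] := fin_uv.
have [W1 W2 W3 W4] := Wfact.
have [q1 q2] := qinv; have [p1 p2] := pinv.
have [q3 q4] := q1inv; have [p3 p4] := p1inv.
have UW' := UW; have UG1' := UG1; have UG2' := UG2; have Us := Usg'.
have UFa' := UFa; have UFb' := UFb; have UFc' := UFc; have UFd' := UFd.
have eFa : Fa = 1 - a^-1 by []. have eFb : Fb = 1 - b^-1 by [].
have eFc : Fc = 1 - c^-1 by []. have eFd : Fd = 1 - d^-1 by [].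
have -> : a' - b' = (a' - 1) - (b' - 1) by rewrite opprB addrA subrK.
rewrite omegaW Winv_sg y1inv L2 U1 P1 P2 inv_sg // /Ut.
ncr [:: sg; sg^-1; W; W^-1; p; q; GG1; GG1^-1; Fa; Fb; Fc; Fd; Fc^-1; Fd^-1; a^-1; c^-1; Dl]
  (conj W1 (conj (mulrV UW') (conj (mulVr UW') (conj (mulrV UG1') (conj (mulVr UG1')
  (conj (mulrV Us) (conj (mulVr Us) (conj p1 (conj p2 (conj (mulrV UFc') (conj (mulVr UFc')
  (conj (mulrV UFd') (conj (mulVr UFd') (conj eFa (conj eFc I))))))))))))))) 3%N 6%N 100000%N.
Qed.

Lemma fin12 : (omega a b c d)^-1 * ((c^-1 - 1) * (d^-1 - c^-1)^-1 * (- (b * g22 * d + (d - d * g22 * d))^-1))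
                * omega a b c d = (c' - 1)^-1 * (d' - c') * (- (h21 + h22)).
Proof.
have [P1 P2 P3 P4] := primes1.
have [L1 L2 L3 L4] := Lforms.
have [U1 U2] := fin_uv.
have [W1 W2 W3 W4] := Wfact.
have [q1 q2] := qinv; have [p1 p2] := pinv.
have [q3 q4] := q1inv; have [p3 p4] := p1inv.
have UW' := UW; have UG1' := UG1; have UG2' := UG2; have Us := Usg'.
have UFa' := UFa; have UFb' := UFb; have UFc' := UFc; have UFd' := UFd.
have eFa : Fa = 1 - a^-1 by []. have eFb : Fb = 1 - b^-1 by [].
have eFc : Fc = 1 - c^-1 by []. have eFd : Fd = 1 - d^-1 by [].
have -> : d' - c' = (d' - 1) - (c' - 1) by rewrite opprB addrA subrK.
rewrite omegaW Winv_sg y2inv L3 U2 P3 P4 inv_sg // /Vt.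
ncr [:: sg; sg^-1; W; W^-1; p; q; GG2; GG2^-1; Fa; Fb; Fc; Fd; Fa^-1; Fb^-1; b^-1; d^-1; Dl]
  (conj W3 (conj (mulrV UW') (conj (mulVr UW') (conj (mulrV UG2') (conj (mulVr UG2')
  (conj (mulrV Us) (conj (mulVr Us) (conj q3 (conj q4 (conj (mulrV UFa') (conj (mulVr UFa')
  (conj (mulrV UFb') (conj (mulVr UFb') (conj eFb (conj eFd I))))))))))))))) 3%N 6%N 100000%N.
Qed.

Lemma fin22 : (omega a b c d)^-1 * ((a^-1 - 1) * (b^-1 - a^-1)^-1 * (- (b * g22 * d + (d - d * g22 * d))^-1))
                * omega a b c d = (a' - 1)^-1 * (b' - a') * (- (h21 + h22)).
Proof.
have [P1 P2 P3 P4] := primes1.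
have [L1 L2 L3 L4] := Lforms.
have [U1 U2] := fin_uv.
have [W1 W2 W3 W4] := Wfact.
have [q1 q2] := qinv; have [p1 p2] := pinv.
have [q3 q4] := q1inv; have [p3 p4] := p1inv.
have UW' := UW; have UG1' := UG1; have UG2' := UG2; have Us := Usg'.
have UFa' := UFa; have UFb' := UFb; have UFc' := UFc; have UFd' := UFd.
have eFa : Fa = 1 - a^-1 by []. have eFb : Fb = 1 - b^-1 by [].
have eFc : Fc = 1 - c^-1 by []. have eFd : Fd = 1 - d^-1 by [].
have -> : b' - a' = (b' - 1) - (a' - 1) by rewrite opprB addrA subrK.
rewrite omegaW Winv_sg y2inv L4 U2 P1 P2 inv_sg // /Vt.
ncr [:: sg; sg^-1; W; W^-1; p; q; GG2; GG2^-1; Fa; Fb; Fc; Fd; Fc^-1; Fd^-1; b^-1; d^-1; Dl]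
  (conj W4 (conj (mulrV UW') (conj (mulVr UW') (conj (mulrV UG2') (conj (mulVr UG2')
  (conj (mulrV Us) (conj (mulVr Us) (conj p3 (conj p4 (conj (mulrV UFc') (conj (mulVr UFc')
  (conj (mulrV UFd') (conj (mulVr UFd') (conj eFb (conj eFd I))))))))))))))) 3%N 6%N 100000%N.
Qed.

Lemma omega_unit : omega a b c d \is a GRing.unit.
Proof. by rewrite omegaW unitrMl ?UW ?Usg'. Qed.
Lemma fin_pack : omega a b c d \is a GRing.unit /\
  [/\ (omega a b c d)^-1 * ((d^-1 - 1) * (c^-1 - d^-1)^-1 * (- (- (b * g22 * c) + d * g22 * c)^-1))
                * omega a b c d = (d' - 1)^-1 * (c' - d') * (- (h11 + h12)),
      (omega a b c d)^-1 * ((c^-1 - 1) * (d^-1 - c^-1)^-1 * (- (b * g22 * d + (d - d * g22 * d))^-1))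
                * omega a b c d = (c' - 1)^-1 * (d' - c') * (- (h21 + h22)),
      (omega a b c d)^-1 * ((b^-1 - 1) * (a^-1 - b^-1)^-1 * (- (- (b * g22 * c) + d * g22 * c)^-1))
                * omega a b c d = (b' - 1)^-1 * (a' - b') * (- (h11 + h12))
    & (omega a b c d)^-1 * ((a^-1 - 1) * (b^-1 - a^-1)^-1 * (- (b * g22 * d + (d - d * g22 * d))^-1))
                * omega a b c d = (a' - 1)^-1 * (b' - a') * (- (h21 + h22))].
Proof using All.
split; first exact: omega_unit.
split; [exact: fin11 | exact: fin12 | exact: fin21 | exact: fin22].
Qed.
End Fin.


Lemma f2_0 (r1 r2 : 'I_3) : f2 r1 r2 p0 = r1. Proof. by rewrite /f2 eqxx. Qed.
Lemma f2_1 (r1 r2 : 'I_3) : f2 r1 r2 p1 = r2. Proof. by []. Qed.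

Section Main.
Variable R : unitRingType.

Lemma minor_unit (M : 'M[R]_3) (r1 r2 c1 c2 : 'I_3) : r1 != r2 -> c1 != c2 ->
  (forall (k : nat) (f g : 'I_k -> 'I_3), injective f -> injective g ->
     mx_invertible (\matrix_(i, j) M (f i) (g j))) ->
  M r1 c1 = 1 -> M r2 c2 - M r2 c1 * M r1 c2 \is a GRing.unit.
Proof.
move=> Hr Hc H H1.
have /inv2_eqs [n11 [n12 [n21 [n22 [[e1 e2 e3 e4] [e5 e6 e7 e8]]]]]] := minor2 Hr Hc H.
rewrite !mxE !f2_0 !f2_1 H1 in e1 e2 e3 e4 e5 e6 e7 e8.
exact: (schur1 e1 e2 e3 e4 e5 e6 e7 e8).
Qed.

Lemma is_hat_hatmx (a b c d : R) : is_hat (hatmx a b c d).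
Proof. by move=> k; rewrite zo; move: k; apply: ord3P; rewrite !mxE. Qed.

Lemma Uinv1 (x : R) : x \is a GRing.unit -> x - 1 \is a GRing.unit -> x^-1 - 1 \is a GRing.unit.
Proof.
move=> Ux Ux1; have -> : x^-1 - 1 = x^-1 * (1 - x) by rewrite mulrBr mulr1 mulVr.
by apply: uM; [rewrite unitrV | apply: uN].
Qed.

Lemma J2hat (a b c d : R) : a \is a GRing.unit -> b \is a GRing.unit -> c \is a GRing.unit -> d \is a GRing.unit ->
  J2 (hatmx a b c d) = hatmx a^-1 c^-1 b^-1 d^-1.
Proof.
move=> *; apply/matrixP => j k; rewrite !mxE.
by move: j k; apply: ord3P; apply: ord3P; rewrite /= ?invr1.
Qed.

Theorem theorem4_sec (a b c d : R) :
  in_Shat (hatmx a b c d) ->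
  [/\ domPhi (hatmx a b c d), domPhi (Phi (hatmx a b c d)),
      domPhiinv (hatmx a b c d),
      omega a b c d \is a GRing.unit
    & Phi (Phi (hatmx a b c d)) = conj_by (omega a b c d) (Phiinv (hatmx a b c d))].
Proof.
case=> [[Hsub [HuA HJ]] _].
have Ua : a \is a GRing.unit by have := HuA o1 o1; rewrite mxE.
have Ub : b \is a GRing.unit by have := HuA o1 o2; rewrite mxE.
have Uc : c \is a GRing.unit by have := HuA o2 o1; rewrite mxE.
have Ud : d \is a GRing.unit by have := HuA o2 o2; rewrite mxE.
have mk := @minor_unit (hatmx a b c d).
have Ua1 : a - 1 \is a GRing.unit.
  by have := mk o0 o1 o0 o1 isT isT Hsub; rewrite !mxE /= mulr1; apply.
have Ub1 : b - 1 \is a GRing.unit.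
  by have := mk o0 o1 o0 o2 isT isT Hsub; rewrite !mxE /= mulr1; apply.
have Uc1 : c - 1 \is a GRing.unit.
  by have := mk o0 o2 o0 o1 isT isT Hsub; rewrite !mxE /= mulr1; apply.
have Ud1 : d - 1 \is a GRing.unit.
  by have := mk o0 o2 o0 o2 isT isT Hsub; rewrite !mxE /= mulr1; apply.
have Uba : b - a \is a GRing.unit.
  by have := mk o0 o1 o1 o2 isT isT Hsub; rewrite !mxE /= mulr1; apply.
have Udc : d - c \is a GRing.unit.
  by have := mk o0 o2 o1 o2 isT isT Hsub; rewrite !mxE /= mulr1; apply.
have Uca : c - a \is a GRing.unit.
  by have := mk o1 o2 o0 o1 isT isT Hsub; rewrite !mxE /= mul1r; apply.
have Udb : d - b \is a GRing.unit.
  by have := mk o1 o2 o0 o2 isT isT Hsub; rewrite !mxE /= mul1r; apply.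
have /inv2_eqs [g11 [g12 [g21 [g22 [[G1 G2 G3 G4] [G5 G6 G7 G8]]]]]] :=
  minor2 (r1 := o1) (r2 := o2) (c1 := o1) (c2 := o2) isT isT Hsub.
rewrite !mxE !f2_0 !f2_1 /= in G1 G2 G3 G4 G5 G6 G7 G8.
have HA : mx_invertible (hatmx a b c d).
  have := Hsub 3%N id id (@inj_id _) (@inj_id _).
  by have -> : \matrix_(i, j) hatmx a b c d (id i) (id j) = hatmx a b c d by apply/matrixP => i j; rewrite mxE.
have [HM1 HM2] := minv_spec HA.
have HallM := hpack_units HM1 HM2 Ua1 Ub1 Uc1 Ud1 Uba Udc Uca Udb G1 G2 G3 G4 G5 G6 G7 G8.
have HphiA := hpack_phi HM1 HM2 Ua1 Ub1 Uc1 Ud1 Uba Udc Uca Udb G1 G2 G3 G4 G5 G6 G7 G8.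
have [HNM1 HNM2] := hNM HM1 HM2 Ua1 Ub1 Uc1 Ud1 Uba Udc Uca Udb G1 G2 G3 G4 G5 G6 G7 G8.
have [R1 R2 R3 R4] := hratio HM1 HM2 Ua1 Ub1 Uc1 Ud1 Uba Udc Uca Udb G1 G2 G3 G4 G5 G6 G7 G8.
have [Uu Uv] := huv HM1 HM2 Ua1 Ub1 Uc1 Ud1 Uba Udc Uca Udb G1 G2 G3 G4 G5 G6 G7 G8.
have [Hs1 Hs2] := hsig HM1 HM2 Ua1 Ub1 Uc1 Ud1 Uba Udc Uca Udb G1 G2 G3 G4 G5 G6 G7 G8.
rewrite /u /v in HphiA R1 R2 R3 R4 Uu Uv Hs1 Hs2.
set M := minv (hatmx a b c d) in HM1 HM2 HallM HphiA HNM1 HNM2 R1 R2 R3 R4 Hs1 Hs2.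
have Usg : 1 - (g11 + g12) - (g21 + g22) \is a GRing.unit.
  by apply/unitrP; exists (M o0 o0).
have EJ := J2hat Ua Ub Uc Ud.
have HJ' := HJ; rewrite EJ in HJ'.
have [HC1 HC2] := minv_spec HJ'.
have Ua' : a^-1 - 1 \is a GRing.unit by apply: Uinv1.
have Ub' : c^-1 - 1 \is a GRing.unit by apply: Uinv1.
have Uc' : b^-1 - 1 \is a GRing.unit by apply: Uinv1.
have Ud' : d^-1 - 1 \is a GRing.unit by apply: Uinv1.
have Uba' : c^-1 - a^-1 \is a GRing.unit by apply: Ldiff => //; apply: uN.
have Udc' : d^-1 - b^-1 \is a GRing.unit by apply: Ldiff => //; apply: uN.
have Uca' : b^-1 - a^-1 \is a GRing.unit by apply: Ldiff => //; apply: uN.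
have Udb' : d^-1 - c^-1 \is a GRing.unit by apply: Ldiff => //; apply: uN.
have [[K1 K2 K3 K4] [K5 K6 K7 K8]] := E2pack G1 G2 G3 G4 G5 G6 G7 G8 Ua Ub Uc Ud.
set C := minv (hatmx a^-1 c^-1 b^-1 d^-1) in HC1 HC2.
have HallC := hpack_units HC1 HC2 Ua' Ub' Uc' Ud' Uba' Udc' Uca' Udb' K1 K2 K3 K4 K5 K6 K7 K8.
have HlrC := hpack_lr HC1 HC2 Ua' Ub' Uc' Ud' Uba' Udc' Uca' Udb' K1 K2 K3 K4 K5 K6 K7 K8.
have [UQ12 UQ21] := hQ HC1 HC2 Ua' Ub' Uc' Ud' Uba' Udc' Uca' Udb' K1 K2 K3 K4 K5 K6 K7 K8.
have [[N1 N2 N3 N4] [N5 N6 N7 N8]] := hNM HC1 HC2 Ua' Ub' Uc' Ud' Uba' Udc' Uca' Udb' K1 K2 K3 K4 K5 K6 K7 K8.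
rewrite /y1 /y2 in HlrC.
have [Usg' [P1 P2 P3 P4]] := fin_primes Ua Ub Uc Ud Ua1 Ub1 Uc1 Ud1 Uba Udc Uca Udb G1 G2 G3 G4 G5 G6 G7 G8 UQ12 UQ21 Usg.
have [[Y1 Y2 Y3 Y4] [Y5 Y6 Y7 Y8]] := E2pack
  (z11 := d^-1 - 1) (z12 := b^-1 - 1) (z21 := c^-1 - 1) (z22 := a^-1 - 1)
  (w11 := C o2 o2) (w12 := C o2 o1) (w21 := C o1 o2) (w22 := C o1 o1)
  ltac:(by rewrite addrC) ltac:(by rewrite addrC) ltac:(by rewrite addrC) ltac:(by rewrite addrC)
  ltac:(by rewrite addrC) ltac:(by rewrite addrC) ltac:(by rewrite addrC) ltac:(by rewrite addrC)
  Ud' Uc' Ub' Ua'.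
set sg := g11 + g12 + (g21 + g22) - 1 in Usg' P1 P2 P3 P4.
have Fneg : forall x : R, (1 - x^-1)^-1 = - (x^-1 - 1)^-1 by move=> x; rewrite -[RHS]invrN opprB.
rewrite !Fneg in P1 P2 P3 P4.
set a' := (d - 1)^-1 * (c - d) * - (g11 + g12) in HphiA P1.
set b' := (c - 1)^-1 * (d - c) * - (g21 + g22) in HphiA P2.
set c' := (b - 1)^-1 * (a - b) * - (g11 + g12) in HphiA P3.
set d' := (a - 1)^-1 * (b - a) * - (g21 + g22) in HphiA P4.
set C11 := C o1 o1 in Y1 Y2 Y3 Y4 Y5 Y6 Y7 Y8.
have HPA : mx_invertible (hatmx a' b' c' d').
  apply: (hat_inv (n11 := - (sg^-1 * - ((b^-1 - 1) * C11 * (c^-1 - 1))))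
                  (n12 := - (sg^-1 * ((b^-1 - 1) * C11 * (a^-1 - 1))))
                  (n21 := - (sg^-1 * ((a^-1 - 1) * C11 * (c^-1 - 1))))
                  (n22 := - (sg^-1 * ((a^-1 - 1) - (a^-1 - 1) * C11 * (a^-1 - 1)))));
  rewrite ?P1 ?P2 ?P3 ?P4;
  ncr [:: sg; sg^-1; a^-1; b^-1; c^-1; d^-1; C11; (a^-1 - 1)^-1; (b^-1 - 1)^-1; (c^-1 - 1)^-1; (d^-1 - 1)^-1]
    (conj Y1 (conj Y2 (conj Y3 (conj Y4 (conj Y5 (conj Y6 (conj Y7 (conj Y8
     (conj (mulrV Usg') (conj (mulVr Usg') I)))))))))) 2%N 6%N 100000%N.
have [HP1 HP2] := minv_spec HPA.
set M' := minv (hatmx a' b' c' d') in HP1 HP2.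
have Ud2 : forall x y : R, x - y \is a GRing.unit -> (x - 1) - (y - 1) \is a GRing.unit.
  by move=> x y; rewrite opprB addrA subrK.
have UY : forall x : R, x \is a GRing.unit -> (- x^-1) * sg \is a GRing.unit.
  by move=> x Ux; apply: uM => //; rewrite unitrN unitrV.
have Ua1' : a' - 1 \is a GRing.unit by rewrite P1; apply: UY.
have Ub1' : b' - 1 \is a GRing.unit by rewrite P2; apply: UY.
have Uc1' : c' - 1 \is a GRing.unit by rewrite P3; apply: UY.
have Ud1' : d' - 1 \is a GRing.unit by rewrite P4; apply: UY.
have Dform : forall x y X Y : R, x - 1 = - X^-1 * sg -> y - 1 = - Y^-1 * sg ->
    y - x = (X^-1 - Y^-1) * sg.
  by move=> x y X Y Hx Hy; rewrite -(subrK 1 x) -(subrK 1 y) Hx Hy; ncr [:: X^-1; Y^-1; sg] I 0%N 0%N 1000%N.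
have Uba'' : b' - a' \is a GRing.unit.
  rewrite (Dform _ _ _ _ P1 P2); apply: uM => //; apply: Ldiff => //; apply: Ud2; exact: Ldiff.
have Udc'' : d' - c' \is a GRing.unit.
  rewrite (Dform _ _ _ _ P3 P4); apply: uM => //; apply: Ldiff => //; apply: Ud2; exact: Ldiff.
have Uca'' : c' - a' \is a GRing.unit.
  rewrite (Dform _ _ _ _ P1 P3); apply: uM => //; apply: Ldiff => //; apply: Ud2; exact: Ldiff.
have Udb'' : d' - b' \is a GRing.unit.
  rewrite (Dform _ _ _ _ P2 P4); apply: uM => //; apply: Ldiff => //; apply: Ud2; exact: Ldiff.
case: HNM1 => nm1 nm2 nm3 nm4; case: HNM2 => nm5 nm6 nm7 nm8.
have [[T1 T2 T3 T4] [T5 T6 T7 T8]] := E2pack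
  (z11 := M o1 o1) (z12 := M o1 o2) (z21 := M o2 o1) (z22 := M o2 o2)
  (w11 := a - 1) (w12 := b - 1) (w21 := c - 1) (w22 := d - 1)
  nm5 nm6 nm7 nm8 nm1 nm2 nm3 nm4
  (HallM o1 o1) (HallM o1 o2) (HallM o2 o1) (HallM o2 o2).
have Unu : - (g11 + g12) \is a GRing.unit by rewrite unitrN.
have Unv : - (g21 + g22) \is a GRing.unit by rewrite unitrN.
have U01 := HallM o0 o1; have U02 := HallM o0 o2.
set h11 := (- (g11 + g12))^-1 * (- (M o1 o2 * (d - 1) * M o2 o1)) * (M o0 o1)^-1.
set h12 := (- (g11 + g12))^-1 * (M o1 o2 * (d - 1) * M o2 o2) * (M o0 o2)^-1.
set h21 := (- (g21 + g22))^-1 * (M o2 o2 * (d - 1) * M o2 o1) * (M o0 o1)^-1.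
set h22 := (- (g21 + g22))^-1 * (M o2 o2 - M o2 o2 * (d - 1) * M o2 o2) * (M o0 o2)^-1.
have Ea' : a' = M o0 o1 * (M o1 o1)^-1 * - (g11 + g12) by rewrite /a' R1.
have Eb' : b' = M o0 o1 * (M o2 o1)^-1 * - (g21 + g22) by rewrite /b' R2.
have Ec' : c' = M o0 o2 * (M o1 o2)^-1 * - (g11 + g12) by rewrite /c' R3.
have Ed' : d' = M o0 o2 * (M o2 o2)^-1 * - (g21 + g22) by rewrite /d' R4.
have GG : [/\ a' * h11 + b' * h21 = 1, a' * h12 + b' * h22 = 0, c' * h11 + d' * h21 = 0
            & c' * h12 + d' * h22 = 1] /\ [/\ h11 * a' + h12 * c' = 1, h11 * b' + h12 * d' = 0,
            h21 * a' + h22 * c' = 0 & h21 * b' + h22 * d' = 1].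
  rewrite Ea' Eb' Ec' Ed' /h11 /h12 /h21 /h22.
  split; split; ncr [:: M o0 o1; M o0 o2; (M o0 o1)^-1; (M o0 o2)^-1; (M o1 o1)^-1; (M o1 o2)^-1;
               (M o2 o1)^-1; (M o2 o2)^-1; M o1 o1; M o1 o2; M o2 o1; M o2 o2; d;
               g11; g12; g21; g22; (- (g11 + g12))^-1; (- (g21 + g22))^-1]
    (conj T1 (conj T2 (conj T3 (conj T4 (conj T5 (conj T6 (conj T7 (conj T8
    (conj (mulrV U01) (conj (mulVr U01) (conj (mulrV U02) (conj (mulVr U02)
    (conj (mulrV Unu) (conj (mulVr Unu) (conj (mulrV Unv) (conj (mulVr Unv) I)))))))))))))))) 2%N 6%N 100000%N.
case: GG => [[H1' H2' H3' H4'] [H5' H6' H7' H8']].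
have HallM' := hpack_units HP1 HP2 Ua1' Ub1' Uc1' Ud1' Uba'' Udc'' Uca'' Udb'' H1' H2' H3' H4' H5' H6' H7' H8'.
have HphiP := hpack_phi HP1 HP2 Ua1' Ub1' Uc1' Ud1' Uba'' Udc'' Uca'' Udb'' H1' H2' H3' H4' H5' H6' H7' H8'.
rewrite /u /v in HphiP.
have [Uom [F11 F12 F21 F22]] := fin_pack Ua Ub Uc Ud Ua1 Ub1 Uc1 Ud1 Uba Udc Uca Udb G1 G2 G3 G4 G5 G6 G7 G8
  UQ12 UQ21 Usg H5' H6' H7' H8'.
have EPhiA : Phi (hatmx a b c d) = hatmx a' b' c' d' by rewrite /Phi -/M HphiA.
have Uall' : all_units (hatmx a' b' c' d').
  have U11 := HallM o1 o1; have U12 := HallM o1 o2; have U21 := HallM o2 o1; have U22 := HallM o2 o2.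
  have Ui : forall x : R, x \is a GRing.unit -> x^-1 \is a GRing.unit by move=> x; rewrite unitrV.
  move=> j k; move: j; apply: ord3P; move: k; apply: ord3P; rewrite mxE /=;
    rewrite ?unitr1 ?Ea' ?Eb' ?Ec' ?Ed' //; by apply: uM; [apply: uM => //; apply: Ui|].
split.
- split; first by split; [exact: HA | exact: HallM].
  by split; [exact: is_hat_hatmx | exact: HuA].
- rewrite EPhiA; split; first by split; [exact: HPA | exact: HallM'].
  by split; [exact: is_hat_hatmx | exact: Uall'].
- split; first by split; [exact: HuA | exact: HJ].
  by rewrite /Jinv EJ; exact: HallC.
- exact: Uom.
rewrite EPhiA /Phi -/M' HphiP /Phiinv /Jinv EJ -/C HlrC.
apply/matrixP => j k; rewrite !mxE.
move: j k; apply: ord3P; apply: ord3P => /=;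
  rewrite ?mulr1 ?mulVr //; by [rewrite F11 | rewrite F12 | rewrite F21 | rewrite F22].
Qed.
End Main.


Unset Implicit Arguments.

Theorem theorem4 (R : unitRingType) (a b c d : R) :
  in_Shat (hatmx a b c d) ->
  [/\ domPhi (hatmx a b c d), domPhi (Phi (hatmx a b c d)),
      domPhiinv (hatmx a b c d),
      omega a b c d \is a GRing.unit
    & Phi (Phi (hatmx a b c d)) = conj_by (omega a b c d) (Phiinv (hatmx a b c d))].
Proof. exact: (@theorem4_sec R a b c d). Qed.
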